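(* Let $c>1$ and $\Gamma=\{z\mapsto c^nz: n\in\mathbb{Z}\}$. A holomorphic function $F:G\to\mathbb{C}$ satisfies $F(c^nz,c^nw)=F(z,w)$ for all $(z,w)\in G$ and $n\in\mathbb{Z}$ if and only if there is an entire function $g$ with $F(z,w)=g\!\left(\frac{w}{z-w}\right)$ for all $(z,w)\in G$.
   Context: $\hat{\mathbb{C}}=\mathbb{C}\cup\{\infty\}$; $G=\hat{\mathbb{C}}^2\setminus\{(z,z):z\in\hat{\mathbb{C}}\}$. The map $(z,w)\mapsto w/(z-w)$ is understood as the holomorphic map $G\to\mathbb{C}$ obtained by continuous extension (value $0$ at $(\infty,w)$, value $-1$ at $(z,\infty)$); also $c^n\cdot\infty=\infty$. *)

(* Defs.v *)
From Stdlib Require Import Reals ZArith.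
From Coquelicot Require Import Coquelicot.
Open Scope R_scope.

Inductive Chat : Type := Fin (z : C) | Inf.

Definition holo1_at (g : C -> C) (z : C) : Prop :=
  exists a : C, forall eps : R, 0 < eps -> exists delta : R, 0 < delta /\
    forall h : C, Cmod h < delta ->
      Cmod (Cminus (Cminus (g (Cplus z h)) (g z)) (Cmult a h)) <= eps * Cmod h.

Definition entire (g : C -> C) : Prop := forall z : C, holo1_at g z.

Definition holo2_at (f : C -> C -> C) (u v : C) : Prop :=
  exists a b : C, forall eps : R, 0 < eps -> exists delta : R, 0 < delta /\
    forall h k : C, Cmod h < delta -> Cmod k < delta ->
      Cmod (Cminus (Cminus (f (Cplus u h) (Cplus v k)) (f u v))
                   (Cplus (Cmult a h) (Cmult b k)))
        <= eps * (Cmod h + Cmod k).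

Definition chart (i : bool) (u : C) : Chat :=
  if i then (if Ceq_dec u (RtoC 0) then Inf else Fin (Cinv u)) else Fin u.

(* G = \hat C^2 minus the diagonal; F : G -> C is represented by a total
   function Chat -> Chat -> C whose values on the diagonal are irrelevant.
   F is holomorphic on G iff in every product chart (u,v) |-> F(chart i u, chart j v)
   is holomorphic on the (open) chart domain {(u,v) | chart i u <> chart j v}. *)
Definition holomorphic_on_G (F : Chat -> Chat -> C) : Prop :=
  forall (i j : bool) (u v : C), chart i u <> chart j v ->
    holo2_at (fun u' v' => F (chart i u') (chart j v')) u v.

Definition scale (r : R) (p : Chat) : Chat :=
  match p with Fin z => Fin (Cmult (RtoC r) z) | Inf => Inf end.

(* (z,w) |-> w/(z-w), continuously extended to G:
   value 0 at (∞,w), value -1 at (z,∞); the diagonal value (∞,∞) is irrelevant. *)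
Definition ratio (p q : Chat) : C :=
  match p, q with
  | Fin z, Fin w => Cdiv w (Cminus z w)
  | Inf, Fin _ => RtoC 0
  | Fin _, Inf => RtoC (-1)
  | Inf, Inf => RtoC 0
  end.

(* Main.v *)
Require Import Defs.
From Stdlib Require Import Reals ZArith Lra Lia.
From Coquelicot Require Import Coquelicot.
From Stdlib Require Import ClassicalEpsilon Classical FunctionalExtensionality.
Open Scope R_scope.


Ltac cpair := apply injective_projections; simpl; try field; try ring.

Lemma Cmod_le_sum (z : C) : Cmod z <= Rabs (fst z) + Rabs (snd z).
Proof.
  unfold Cmod. destruct z as [x y]; simpl.
  pose proof (Rabs_pos x); pose proof (Rabs_pos y).
  rewrite <- (sqrt_Rsqr (Rabs x + Rabs y)) by lra.
  apply sqrt_le_1_alt. pose proof (Rsqr_abs x); pose proof (Rsqr_abs y).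
  unfold Rsqr in *. nra.
Qed.

Lemma Rabs_fst_le (z : C) : Rabs (fst z) <= Cmod z.
Proof. pose proof (Rmax_Cmod z). pose proof (Rmax_l (Rabs (fst z)) (Rabs (snd z))). lra. Qed.
Lemma Rabs_snd_le (z : C) : Rabs (snd z) <= Cmod z.
Proof. pose proof (Rmax_Cmod z). pose proof (Rmax_r (Rabs (fst z)) (Rabs (snd z))). lra. Qed.

Lemma Cmod_minus_sym (a b : C) : Cmod (Cminus a b) = Cmod (Cminus b a).
Proof. rewrite <- Cmod_opp. f_equal. ring. Qed.

Lemma Cmod_triangle_minus (a b : C) : Cmod a - Cmod b <= Cmod (Cminus a b).
Proof.
  pose proof (Cmod_triangle (Cminus a b) b).
  replace (Cplus (Cminus a b) b) with a in H by ring. lra.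
Qed.

Lemma Cmod_RtoC_pos (r : R) : 0 <= r -> Cmod (RtoC r) = r.
Proof. intros. rewrite Cmod_R. apply Rabs_right. lra. Qed.

Definition RI (f : R -> C) (a b : R) : C := RInt (V:=C_R_CompleteNormedModule) f a b.
Definition exRI (f : R -> C) (a b : R) : Prop := ex_RInt (V:=C_R_CompleteNormedModule) f a b.

Lemma RI_plus f g a b : exRI f a b -> exRI g a b ->
  RI (fun t => Cplus (f t) (g t)) a b = Cplus (RI f a b) (RI g a b).
Proof. intros Hf Hg. unfold RI. exact (RInt_plus (V:=C_R_CompleteNormedModule) f g a b Hf Hg). Qed.

Lemma RI_minus f g a b : exRI f a b -> exRI g a b ->
  RI (fun t => Cminus (f t) (g t)) a b = Cminus (RI f a b) (RI g a b).
Proof. intros Hf Hg. unfold RI. exact (RInt_minus (V:=C_R_CompleteNormedModule) f g a b Hf Hg). Qed.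

Lemma RI_const v a b : RI (fun _ => v) a b = Cmult (RtoC (b - a)) v.
Proof. unfold RI. rewrite RInt_const. apply injective_projections; simpl; unfold scal; simpl; unfold mult; simpl; ring. Qed.

Lemma RI_ext f g a b : (forall x, Rmin a b < x < Rmax a b -> f x = g x) -> RI f a b = RI g a b.
Proof. intros. unfold RI. apply (RInt_ext (V:=C_R_CompleteNormedModule)). auto. Qed.

Lemma is_RI_Cmult (f : R -> C) a b l k :
  is_RInt (V:=C_R_NormedModule) f a b l ->
  is_RInt (V:=C_R_NormedModule) (fun t => Cmult k (f t)) a b (Cmult k l).
Proof.
  intros H.
  assert (H1 : is_RInt (fun t => fst (f t)) a b (fst l)).
  { apply (is_RInt_fct_extend_fst (U:=R_NormedModule) (V:=R_NormedModule)). exact H. }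
  assert (H2 : is_RInt (fun t => snd (f t)) a b (snd l)).
  { apply (is_RInt_fct_extend_snd (U:=R_NormedModule) (V:=R_NormedModule)). exact H. }
  destruct k as [kr ki].
  apply (is_RInt_fct_extend_pair (U:=R_NormedModule) (V:=R_NormedModule)).
  - simpl.
    pose proof (is_RInt_minus _ _ _ _ _ _ (is_RInt_scal _ _ _ kr _ H1) (is_RInt_scal _ _ _ ki _ H2)) as H3.
    eapply is_RInt_ext; [|exact H3]. intros. simpl. unfold minus, plus, opp, scal; simpl.
    unfold mult; simpl. ring.
  - simpl.
    pose proof (is_RInt_plus _ _ _ _ _ _ (is_RInt_scal _ _ _ kr _ H2) (is_RInt_scal _ _ _ ki _ H1)) as H3.
    replace (kr * snd l + ki * fst l) with (plus (scal kr (snd l)) (scal ki (fst l))).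
    2:{ unfold plus, scal; simpl. unfold mult; simpl. ring. }
    eapply is_RInt_ext; [|exact H3]. intros. simpl. unfold plus, scal; simpl.
    unfold mult; simpl. ring.
Qed.

Lemma RI_Cmult f a b k : exRI f a b -> RI (fun t => Cmult k (f t)) a b = Cmult k (RI f a b).
Proof.
  intros Hf. unfold RI. apply (is_RInt_unique (V:=C_R_CompleteNormedModule)).
  apply is_RI_Cmult. apply (RInt_correct (V:=C_R_CompleteNormedModule)). exact Hf.
Qed.

Lemma norm_C (z : C) : norm (K:=R_AbsRing) (V:=C_R_NormedModule) z = Cmod z.
Proof.
  unfold norm; simpl. unfold prod_norm, Cmod. simpl. f_equal.
  change (norm (fst z)) with (Rabs (fst z)). change (norm (snd z)) with (Rabs (snd z)).
  rewrite !Rmult_1_r. rewrite <- !Rabs_mult, !Rabs_right; try ring;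
  apply Rle_ge, Rle_0_sqr.
Qed.

Lemma RI_bound f a b M : a <= b -> exRI f a b ->
  (forall t, a <= t <= b -> Cmod (f t) <= M) -> Cmod (RI f a b) <= (b - a) * M.
Proof.
  intros Hab Hf HM. rewrite <- norm_C.
  apply (norm_RInt_le_const (V:=C_R_NormedModule) f a b); auto.
  - intros. rewrite norm_C. auto.
  - apply (RInt_correct (V:=C_R_CompleteNormedModule)). exact Hf.
Qed.

Lemma RI_Chasles f a b c : exRI f a b -> exRI f b c -> Cplus (RI f a b) (RI f b c) = RI f a c.
Proof. intros. unfold RI. exact (RInt_Chasles (V:=C_R_CompleteNormedModule) f a b c H H0). Qed.

Definition ccont (h : C -> C) (z : C) : Prop :=
  forall e, 0 < e -> exists d, 0 < d /\ forall w, Cmod (Cminus w z) < d -> Cmod (Cminus (h w) (h z)) < e.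

Lemma ccont_path (h : C -> C) (p v : C) (t : R) :
  ccont h (Cplus p (Cmult (RtoC t) v)) ->
  continuous (T:=R_UniformSpace) (U:=C_R_NormedModule) (fun s => h (Cplus p (Cmult (RtoC s) v))) t.
Proof.
  intros Hc. apply (proj2 (filterlim_locally _ _)). intros eps.
  destruct (Hc eps (cond_pos eps)) as [d [Hd Hw]].
  exists (mkposreal (d / (Cmod v + 1)) ltac:(apply Rdiv_lt_0_compat; [lra| pose proof (Cmod_ge_0 v); lra])).
  intros s Hs. simpl in Hs. unfold ball in Hs; simpl in Hs; unfold AbsRing_ball in Hs; simpl in Hs.
  apply C_NormedModule_mixin_compat1.
  apply Hw.
  replace (Cminus (Cplus p (Cmult (RtoC s) v)) (Cplus p (Cmult (RtoC t) v)))
    with (Cmult (RtoC (s - t)) v) by (cpair).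
  rewrite Cmod_mult, Cmod_R. unfold abs, minus, plus, opp in Hs; simpl in Hs.
  pose proof (Cmod_ge_0 v). pose proof (Rabs_pos (s-t)).
  apply Rle_lt_trans with (Rabs (s - t) * (Cmod v + 1)). nra.
  apply Rlt_le_trans with (d / (Cmod v + 1) * (Cmod v + 1)).
  apply Rmult_lt_compat_r. lra. exact Hs. right; field; lra.
Qed.

Lemma path_hor (t y : R) : Cplus (0, y) (Cmult (RtoC t) (1, 0)) = (t, y).
Proof. cpair. Qed.
Lemma path_ver (x t : R) : Cplus (x, 0) (Cmult (RtoC t) (0, 1)) = (x, t).
Proof. cpair. Qed.

Lemma exRI_hor h y a b : (forall t, Rmin a b <= t <= Rmax a b -> ccont h (t, y)) ->
  exRI (fun t => h (t, y)) a b.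
Proof.
  intros H. unfold exRI.
  apply (ex_RInt_ext (V:=C_R_NormedModule) (fun t => h (Cplus (0, y) (Cmult (RtoC t) (1, 0))))).
  { intros. rewrite path_hor. reflexivity. }
  apply (ex_RInt_continuous (V:=C_R_CompleteNormedModule)). intros z Hz.
  apply ccont_path. rewrite path_hor. auto.
Qed.

Lemma exRI_ver h x a b : (forall t, Rmin a b <= t <= Rmax a b -> ccont h (x, t)) ->
  exRI (fun t => h (x, t)) a b.
Proof.
  intros H. unfold exRI.
  apply (ex_RInt_ext (V:=C_R_NormedModule) (fun t => h (Cplus (x, 0) (Cmult (RtoC t) (0, 1))))).
  { intros. rewrite path_ver. reflexivity. }
  apply (ex_RInt_continuous (V:=C_R_CompleteNormedModule)). intros z Hz.
  apply ccont_path. rewrite path_ver. auto.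
Qed.

Open Scope C_scope.
Definition Irect (h : C -> C) (a b c d : R) : C :=
  RI (fun t => h (t, c)) a b + Ci * RI (fun t => h (b, t)) c d
  - RI (fun t => h (t, d)) a b - Ci * RI (fun t => h (a, t)) c d.

Definition bcont (h : C -> C) (a b c d : R) : Prop :=
  (forall t, a <= t <= b -> ccont h (t, c) /\ ccont h (t, d)) /\
  (forall t, c <= t <= d -> ccont h (a, t) /\ ccont h (b, t)).

Definition bbound (h : C -> C) (a b c d B : R) : Prop :=
  (forall t, a <= t <= b -> Cmod (h (t, c)) <= B /\ Cmod (h (t, d)) <= B) /\
  (forall t, c <= t <= d -> Cmod (h (a, t)) <= B /\ Cmod (h (b, t)) <= B).
Close Scope C_scope.

Lemma mm a b : a <= b -> Rmin a b = a /\ Rmax a b = b.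
Proof. intros. split; [apply Rmin_left|apply Rmax_right]; lra. Qed.

Lemma bcont_ex h a b c d : a <= b -> c <= d -> bcont h a b c d ->
  exRI (fun t => h (t, c)) a b /\ exRI (fun t => h (t, d)) a b /\
  exRI (fun t => h (a, t)) c d /\ exRI (fun t => h (b, t)) c d.
Proof.
  intros Hab Hcd [H1 H2]. destruct (mm a b Hab) as [E1 E2]. destruct (mm c d Hcd) as [E3 E4].
  repeat split.
  - apply exRI_hor. rewrite E1, E2. intros. apply H1; auto.
  - apply exRI_hor. rewrite E1, E2. intros. apply H1; auto.
  - apply exRI_ver. rewrite E3, E4. intros. apply H2; auto.
  - apply exRI_ver. rewrite E3, E4. intros. apply H2; auto.
Qed.

Lemma Irect_plus f g a b c d : a <= b -> c <= d -> bcont f a b c d -> bcont g a b c d ->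
  Irect (fun z => Cplus (f z) (g z)) a b c d = Cplus (Irect f a b c d) (Irect g a b c d).
Proof.
  intros Hab Hcd Hf Hg.
  destruct (bcont_ex _ _ _ _ _ Hab Hcd Hf) as [F1 [F2 [F3 F4]]].
  destruct (bcont_ex _ _ _ _ _ Hab Hcd Hg) as [G1 [G2 [G3 G4]]].
  unfold Irect. rewrite !RI_plus by auto. ring.
Qed.

Lemma Irect_minus f g a b c d : a <= b -> c <= d -> bcont f a b c d -> bcont g a b c d ->
  Irect (fun z => Cminus (f z) (g z)) a b c d = Cminus (Irect f a b c d) (Irect g a b c d).
Proof.
  intros Hab Hcd Hf Hg.
  destruct (bcont_ex _ _ _ _ _ Hab Hcd Hf) as [F1 [F2 [F3 F4]]].
  destruct (bcont_ex _ _ _ _ _ Hab Hcd Hg) as [G1 [G2 [G3 G4]]].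
  unfold Irect. rewrite !RI_minus by auto. ring.
Qed.

Lemma Irect_Cmult f k a b c d : a <= b -> c <= d -> bcont f a b c d ->
  Irect (fun z => Cmult k (f z)) a b c d = Cmult k (Irect f a b c d).
Proof.
  intros Hab Hcd Hf.
  destruct (bcont_ex _ _ _ _ _ Hab Hcd Hf) as [F1 [F2 [F3 F4]]].
  unfold Irect. rewrite !RI_Cmult by auto. ring.
Qed.

Lemma Irect_ext f g a b c d : a <= b -> c <= d ->
  (forall z, a <= fst z <= b -> c <= snd z <= d -> f z = g z) ->
  Irect f a b c d = Irect g a b c d.
Proof.
  intros Hab Hcd H. destruct (mm a b Hab) as [E1 E2]. destruct (mm c d Hcd) as [E3 E4].
  unfold Irect.
  rewrite (RI_ext (fun t => f (t, c)) (fun t => g (t, c))) by (rewrite E1, E2; intros x Hx; apply H; simpl; lra).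
  rewrite (RI_ext (fun t => f (t, d)) (fun t => g (t, d))) by (rewrite E1, E2; intros x Hx; apply H; simpl; lra).
  rewrite (RI_ext (fun t => f (a, t)) (fun t => g (a, t))) by (rewrite E3, E4; intros x Hx; apply H; simpl; lra).
  rewrite (RI_ext (fun t => f (b, t)) (fun t => g (b, t))) by (rewrite E3, E4; intros x Hx; apply H; simpl; lra).
  reflexivity.
Qed.

Lemma Cmod_Ci_mult z : Cmod (Cmult Ci z) = Cmod z.
Proof. rewrite Cmod_mult, Cmod_Ci. ring. Qed.

Lemma Cmod4 A B C D : Cmod (Cminus (Cminus (Cplus A (Cmult Ci B)) C) (Cmult Ci D)) <= Cmod A + Cmod B + Cmod C + Cmod D.
Proof.
  unfold Cminus.
  pose proof (Cmod_triangle (Cplus (Cplus A (Cmult Ci B)) (Copp C)) (Copp (Cmult Ci D))).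
  pose proof (Cmod_triangle (Cplus A (Cmult Ci B)) (Copp C)).
  pose proof (Cmod_triangle A (Cmult Ci B)).
  rewrite Cmod_opp in *. rewrite Cmod_Ci_mult in *. lra.
Qed.

Lemma Irect_bound h a b c d B : a <= b -> c <= d -> bcont h a b c d -> bbound h a b c d B ->
  Cmod (Irect h a b c d) <= 2 * ((b - a) + (d - c)) * B.
Proof.
  intros Hab Hcd Hh [B1 B2].
  destruct (bcont_ex _ _ _ _ _ Hab Hcd Hh) as [F1 [F2 [F3 F4]]].
  assert (I1 : Cmod (RI (fun t => h (t, c)) a b) <= (b - a) * B) by (apply RI_bound; auto; intros; apply B1; auto).
  assert (I2 : Cmod (RI (fun t => h (t, d)) a b) <= (b - a) * B) by (apply RI_bound; auto; intros; apply B1; auto).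
  assert (I3 : Cmod (RI (fun t => h (a, t)) c d) <= (d - c) * B) by (apply RI_bound; auto; intros; apply B2; auto).
  assert (I4 : Cmod (RI (fun t => h (b, t)) c d) <= (d - c) * B) by (apply RI_bound; auto; intros; apply B2; auto).
  unfold Irect. eapply Rle_trans. apply Cmod4. lra.
Qed.

Lemma split_v h a m b c d : a <= m -> m <= b -> c <= d ->
  bcont h a m c d -> bcont h m b c d ->
  Irect h a b c d = Cplus (Irect h a m c d) (Irect h m b c d).
Proof.
  intros H1 H2 Hcd Ha Hb.
  destruct (bcont_ex _ _ _ _ _ H1 Hcd Ha) as [F1 [F2 [F3 F4]]].
  destruct (bcont_ex _ _ _ _ _ H2 Hcd Hb) as [G1 [G2 [G3 G4]]].
  unfold Irect. rewrite <- (RI_Chasles (fun t => h (t, c)) a m b) by auto.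
  rewrite <- (RI_Chasles (fun t => h (t, d)) a m b) by auto. ring.
Qed.

Lemma split_h h a b c m d : a <= b -> c <= m -> m <= d ->
  bcont h a b c m -> bcont h a b m d ->
  Irect h a b c d = Cplus (Irect h a b c m) (Irect h a b m d).
Proof.
  intros Hab H1 H2 Ha Hb.
  destruct (bcont_ex _ _ _ _ _ Hab H1 Ha) as [F1 [F2 [F3 F4]]].
  destruct (bcont_ex _ _ _ _ _ Hab H2 Hb) as [G1 [G2 [G3 G4]]].
  unfold Irect. rewrite <- (RI_Chasles (fun t => h (a, t)) c m d) by auto.
  rewrite <- (RI_Chasles (fun t => h (b, t)) c m d) by auto. ring.
Qed.


Lemma holo_ccont h z : holo1_at h z -> ccont h z.
Proof.
  intros [a Ha] e He.
  destruct (Ha 1 Rlt_0_1) as [d [Hd H]].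
  exists (Rmin d (e / (Cmod a + 2))). split.
  { apply Rmin_pos; auto. apply Rdiv_lt_0_compat; auto. pose proof (Cmod_ge_0 a); lra. }
  intros w Hw.
  pose proof (Rmin_l d (e / (Cmod a + 2))). pose proof (Rmin_r d (e / (Cmod a + 2))).
  specialize (H (Cminus w z)). replace (Cplus z (Cminus w z)) with w in H by ring.
  assert (Hk := H ltac:(lra)).
  pose proof (Cmod_triangle (Cminus (Cminus (h w) (h z)) (Cmult a (Cminus w z))) (Cmult a (Cminus w z))).
  replace (Cplus (Cminus (Cminus (h w) (h z)) (Cmult a (Cminus w z))) (Cmult a (Cminus w z)))
    with (Cminus (h w) (h z)) in H2 by ring.
  rewrite Cmod_mult in H2.
  pose proof (Cmod_ge_0 a). pose proof (Cmod_ge_0 (Cminus w z)).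
  assert (Cmod (Cminus w z) * (Cmod a + 2) < e).
  { apply Rlt_le_trans with (e / (Cmod a + 2) * (Cmod a + 2)).
    apply Rmult_lt_compat_r; lra. right; field; lra. }
  nra.
Qed.

Lemma holo_const k z : holo1_at (fun _ => k) z.
Proof.
  exists (RtoC 0). intros e He. exists 1. split; [lra|]. intros h Hh.
  replace (Cminus (Cminus k k) (Cmult (RtoC 0) h)) with (RtoC 0) by ring.
  rewrite Cmod_0. pose proof (Cmod_ge_0 h). nra.
Qed.

Lemma holo_affine A al z : holo1_at (fun w => Cplus A (Cmult al w)) z.
Proof.
  exists al. intros e He. exists 1. split; [lra|]. intros h Hh.
  replace (Cminus (Cminus (Cplus A (Cmult al (Cplus z h))) (Cplus A (Cmult al z))) (Cmult al h)) with (RtoC 0) by ring.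
  rewrite Cmod_0. pose proof (Cmod_ge_0 h). nra.
Qed.

Lemma holo_plus f g z : holo1_at f z -> holo1_at g z -> holo1_at (fun w => Cplus (f w) (g w)) z.
Proof.
  intros [a Ha] [b Hb]. exists (Cplus a b). intros e He.
  destruct (Ha (e/2) ltac:(lra)) as [d1 [Hd1 H1]].
  destruct (Hb (e/2) ltac:(lra)) as [d2 [Hd2 H2]].
  exists (Rmin d1 d2). split. apply Rmin_pos; auto. intros h Hh.
  pose proof (Rmin_l d1 d2). pose proof (Rmin_r d1 d2).
  specialize (H1 h ltac:(lra)). specialize (H2 h ltac:(lra)).
  pose proof (Cmod_triangle (Cminus (Cminus (f (Cplus z h)) (f z)) (Cmult a h))
     (Cminus (Cminus (g (Cplus z h)) (g z)) (Cmult b h))).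
  replace (Cplus (Cminus (Cminus (f (Cplus z h)) (f z)) (Cmult a h))
     (Cminus (Cminus (g (Cplus z h)) (g z)) (Cmult b h))) with
    (Cminus (Cminus (Cplus (f (Cplus z h)) (g (Cplus z h))) (Cplus (f z) (g z))) (Cmult (Cplus a b) h)) in H3 by ring.
  lra.
Qed.

Lemma holo_scal f k z : holo1_at f z -> holo1_at (fun w => Cmult k (f w)) z.
Proof.
  intros [a Ha]. exists (Cmult k a). intros e He.
  pose proof (Cmod_ge_0 k).
  destruct (Ha (e/(Cmod k + 1))) as [d [Hd Hd2]].
  { apply Rdiv_lt_0_compat; lra. }
  exists d. split; auto. intros h Hh. specialize (Hd2 h Hh).
  replace (Cminus (Cminus (Cmult k (f (Cplus z h))) (Cmult k (f z))) (Cmult (Cmult k a) h))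
    with (Cmult k (Cminus (Cminus (f (Cplus z h)) (f z)) (Cmult a h))) by ring.
  rewrite Cmod_mult. pose proof (Cmod_ge_0 h).
  apply Rle_trans with (Cmod k * (e / (Cmod k + 1) * Cmod h)).
  apply Rmult_le_compat_l; auto.
  assert (Cmod k * (e / (Cmod k + 1)) <= e).
  { apply Rle_trans with ((Cmod k + 1) * (e / (Cmod k + 1))).
    apply Rmult_le_compat_r. apply Rlt_le, Rdiv_lt_0_compat; lra. lra.
    right; field; lra. }
  nra.
Qed.

Lemma holo_minus f g z : holo1_at f z -> holo1_at g z -> holo1_at (fun w => Cminus (f w) (g w)) z.
Proof.
  intros Hf Hg.
  assert (E : (fun w => Cminus (f w) (g w)) = (fun w => Cplus (f w) (Cmult (RtoC (-1)) (g w)))).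
  { apply functional_extensionality. intros. ring. }
  rewrite E. apply holo_plus; auto. apply holo_scal; auto.
Qed.

Lemma holo_ext f g z : (forall w, f w = g w) -> holo1_at f z -> holo1_at g z.
Proof. intros. replace g with f; auto. apply functional_extensionality; auto. Qed.

Lemma holo_mult f g z : holo1_at f z -> holo1_at g z -> holo1_at (fun w => Cmult (f w) (g w)) z.
Proof.
  intros Hf Hg. pose proof (holo_ccont g z Hg) as Cg.
  destruct Hf as [a Ha]. destruct Hg as [b Hb].
  exists (Cplus (Cmult a (g z)) (Cmult (f z) b)). intros e He.
  set (F := Cmod (f z)). set (G := Cmod (g z)). set (A := Cmod a).
  assert (F0 : 0 <= F) by apply Cmod_ge_0. assert (G0 : 0 <= G) by apply Cmod_ge_0.
  assert (A0 : 0 <= A) by apply Cmod_ge_0.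
  set (e1 := e / (3 * (G + 2))). set (e2 := e / (3 * (F + 1))). set (e3 := Rmin 1 (e / (3 * (A + 1)))).
  assert (e1p : 0 < e1) by (unfold e1; apply Rdiv_lt_0_compat; lra).
  assert (e2p : 0 < e2) by (unfold e2; apply Rdiv_lt_0_compat; lra).
  assert (e3p : 0 < e3) by (unfold e3; apply Rmin_pos; [lra|apply Rdiv_lt_0_compat; lra]).
  destruct (Ha e1 e1p) as [d1 [Hd1 H1]].
  destruct (Hb e2 e2p) as [d2 [Hd2 H2]].
  destruct (Cg e3 e3p) as [d3 [Hd3 H3]].
  exists (Rmin d1 (Rmin d2 d3)). split. repeat apply Rmin_pos; auto.
  intros h Hh. pose proof (Rmin_l d1 (Rmin d2 d3)). pose proof (Rmin_r d1 (Rmin d2 d3)).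
  pose proof (Rmin_l d2 d3). pose proof (Rmin_r d2 d3).
  specialize (H1 h ltac:(lra)). specialize (H2 h ltac:(lra)).
  specialize (H3 (Cplus z h)). replace (Cminus (Cplus z h) z) with h in H3 by ring.
  specialize (H3 ltac:(lra)).
  set (R1 := Cminus (Cminus (f (Cplus z h)) (f z)) (Cmult a h)) in *.
  set (R2 := Cminus (Cminus (g (Cplus z h)) (g z)) (Cmult b h)) in *.
  set (D := Cminus (g (Cplus z h)) (g z)) in *.
  replace (Cminus (Cminus (Cmult (f (Cplus z h)) (g (Cplus z h))) (Cmult (f z) (g z)))
     (Cmult (Cplus (Cmult a (g z)) (Cmult (f z) b)) h))
    with (Cplus (Cplus (Cmult R1 (g (Cplus z h))) (Cmult (f z) R2)) (Cmult (Cmult a h) D))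
    by (unfold R1, R2, D; ring).
  assert (Gb : Cmod (g (Cplus z h)) <= G + 1).
  { replace (g (Cplus z h)) with (Cplus (g z) D) by (unfold D; ring).
    pose proof (Cmod_triangle (g z) D) as Q1. pose proof (Rmin_l 1 (e / (3 * (A + 1)))) as Q2. fold e3 in Q2. fold G in Q1. lra. }
  pose proof (Cmod_ge_0 h).
  eapply Rle_trans. apply Cmod_triangle. rewrite !Cmod_mult.
  eapply Rle_trans. apply Rplus_le_compat_r. apply Cmod_triangle. rewrite !Cmod_mult.
  fold F A.
  assert (T1 : Cmod R1 * Cmod (g (Cplus z h)) <= e / 3 * Cmod h).
  { apply Rle_trans with (e1 * Cmod h * (G + 2)).
    apply Rmult_le_compat; try apply Cmod_ge_0; lra.
    unfold e1. right. field. lra. }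
  assert (T2 : F * Cmod R2 <= e / 3 * Cmod h).
  { apply Rle_trans with ((F + 1) * (e2 * Cmod h)).
    apply Rmult_le_compat; try apply Cmod_ge_0; lra.
    unfold e2. right. field. lra. }
  assert (T3 : A * Cmod h * Cmod D <= e / 3 * Cmod h).
  { pose proof (Rmin_r 1 (e / (3 * (A + 1)))) as Q3. fold e3 in Q3.
    apply Rle_trans with ((A + 1) * Cmod h * (e / (3 * (A + 1)))).
    apply Rmult_le_compat; try apply Cmod_ge_0; nra.
    right. field. lra. }
  lra.
Qed.

Lemma Cmult_neq0 x y : x <> RtoC 0 -> y <> RtoC 0 -> Cmult x y <> RtoC 0.
Proof.
  intros Hx Hy E. apply Cmod_gt_0 in Hx. apply Cmod_gt_0 in Hy.
  assert (Cmod (Cmult x y) = 0) by (rewrite E; apply Cmod_0).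
  rewrite Cmod_mult in H. nra.
Qed.

Lemma holo_inv_shift p z : z <> p -> holo1_at (fun w => Cinv (Cminus w p)) z.
Proof.
  intros Hzp. set (w := Cminus z p).
  assert (Hw : w <> RtoC 0). { unfold w. intro E. apply Hzp. replace z with (Cplus (Cminus z p) p) by ring. rewrite E. ring. }
  assert (W : 0 < Cmod w) by (apply Cmod_gt_0; auto).
  exists (Copp (Cinv (Cmult w w))). intros e He.
  exists (Rmin (Cmod w / 2) (e * Cmod w * Cmod w * Cmod w / 2)). split.
  { apply Rmin_pos. lra. apply Rdiv_lt_0_compat; [|lra]. repeat apply Rmult_lt_0_compat; auto. }
  intros h Hh. pose proof (Rmin_l (Cmod w / 2) (e * Cmod w * Cmod w * Cmod w / 2)).
  pose proof (Rmin_r (Cmod w / 2) (e * Cmod w * Cmod w * Cmod w / 2)).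
  assert (Hwh : Cmod w / 2 <= Cmod (Cplus w h)).
  { pose proof (Cmod_triangle_minus w (Copp h)). replace (Cminus w (Copp h)) with (Cplus w h) in H1 by ring.
    rewrite Cmod_opp in H1. lra. }
  assert (Hwh0 : Cplus w h <> RtoC 0). { intro E. rewrite E, Cmod_0 in Hwh. lra. }
  replace (Cminus (Cplus z h) p) with (Cplus w h) by (unfold w; ring).
  fold w.
  replace (Cminus (Cminus (Cinv (Cplus w h)) (Cinv w)) (Cmult (Copp (Cinv (Cmult w w))) h))
    with (Cmult (Cmult h h) (Cinv (Cmult (Cmult w w) (Cplus w h)))) by (field; auto).
  rewrite Cmod_mult, Cmod_mult, Cmod_inv, !Cmod_mult.
  2:{ apply Cmult_neq0; [apply Cmult_neq0|]; auto. }
  pose proof (Cmod_ge_0 h).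
  assert (0 < Cmod w * Cmod w * Cmod (Cplus w h)) by (repeat apply Rmult_lt_0_compat; lra).
  apply Rle_trans with (Cmod h * Cmod h * / (Cmod w * Cmod w * (Cmod w / 2))).
  { apply Rmult_le_compat_l. nra. apply Rinv_le_contravar.
    repeat apply Rmult_lt_0_compat; lra. apply Rmult_le_compat_l; nra. }
  assert (Cmod h <= e * Cmod w * Cmod w * Cmod w / 2) by lra.
  apply Rle_trans with (Cmod h * (e * Cmod w * Cmod w * Cmod w / 2) * / (Cmod w * Cmod w * (Cmod w / 2))).
  { apply Rmult_le_compat_r. apply Rlt_le, Rinv_0_lt_compat. repeat apply Rmult_lt_0_compat; lra.
    apply Rmult_le_compat_l; lra. }
  right. field. lra.
Qed.


Lemma div_swap X A B : 0 < A -> 0 < B -> X / A < B -> X / B < A.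
Proof.
  intros HA HB H.
  assert (X < B * A).
  { replace X with (X / A * A) by (field; lra). apply Rmult_lt_compat_r; auto. }
  apply (Rmult_lt_reg_r B); auto. replace (X / B * B) with X by (field; lra). lra.
Qed.

Section Bisect.
Variable P : R -> R -> R -> R -> Prop.
Variables x0 x1 y0 y1 : R.

Definition gA (r : R*R*R*R) := fst (fst (fst r)).
Definition gB (r : R*R*R*R) := snd (fst (fst r)).
Definition gC (r : R*R*R*R) := snd (fst r).
Definition gD (r : R*R*R*R) := snd r.

Definition quad4 (r : R*R*R*R) : R*R*R*R :=
  let a := gA r in let b := gB r in let c := gC r in let d := gD r in
  let m := (a+b)/2 in let n := (c+d)/2 in
  if excluded_middle_informative (P a m c n) then
    if excluded_middle_informative (P m b c n) then
      if excluded_middle_informative (P a m n d) then (m,b,n,d) else (a,m,n,d)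
    else (m,b,c,n)
  else (a,m,c,n).

Hypothesis Hcomb : forall a b c d, x0 <= a -> a <= b -> b <= x1 -> y0 <= c -> c <= d -> d <= y1 ->
   P a ((a+b)/2) c ((c+d)/2) -> P ((a+b)/2) b c ((c+d)/2) ->
   P a ((a+b)/2) ((c+d)/2) d -> P ((a+b)/2) b ((c+d)/2) d -> P a b c d.

Definition inv_r (r : R*R*R*R) (k : nat) : Prop :=
  x0 <= gA r /\ gA r <= gB r /\ gB r <= x1 /\ y0 <= gC r /\ gC r <= gD r /\ gD r <= y1 /\
  gB r - gA r = (x1 - x0) / 2 ^ k /\ gD r - gC r = (y1 - y0) / 2 ^ k /\
  ~ P (gA r) (gB r) (gC r) (gD r).

Lemma quad4_step r k : inv_r r k -> inv_r (quad4 r) (S k) /\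
  gA r <= gA (quad4 r) /\ gB (quad4 r) <= gB r /\ gC r <= gC (quad4 r) /\ gD (quad4 r) <= gD r.
Proof.
  intros (H1 & H2 & H3 & H4 & H5 & H6 & H7 & H8 & H9).
  destruct r as [[[a b] c] d]. unfold gA, gB, gC, gD in *; simpl in *.
  unfold quad4, gA, gB, gC, gD; simpl.
  assert (Hq : 0 < 2 ^ k) by (apply pow_lt; lra).
  assert (E1 : (x1 - x0) / 2 ^ S k = (b - a) / 2) by (rewrite H7; simpl; field; lra).
  assert (E2 : (y1 - y0) / 2 ^ S k = (d - c) / 2) by (rewrite H8; simpl; field; lra).
  destruct (excluded_middle_informative (P a ((a + b) / 2) c ((c + d) / 2))) as [Q1|Q1];
  [destruct (excluded_middle_informative (P ((a + b) / 2) b c ((c + d) / 2))) as [Q2|Q2];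
   [destruct (excluded_middle_informative (P a ((a + b) / 2) ((c + d) / 2) d)) as [Q3|Q3]|]|];
  unfold inv_r, gA, gB, gC, gD; simpl fst; simpl snd; rewrite ?E1, ?E2;
  (repeat split; try lra; try assumption; try (intro Q4; apply H9; apply Hcomb; auto; lra)).
Qed.

Hypothesis Hloc : forall u v, x0 <= u <= x1 -> y0 <= v <= y1 -> exists del, 0 < del /\ forall a b c d, x0 <= a -> a <= u -> u <= b -> b <= x1 -> y0 <= c -> c <= v -> v <= d -> d <= y1 ->
    b - a < del -> d - c < del -> P a b c d.

Fixpoint seqr (k : nat) : R*R*R*R :=
  match k with O => (x0, x1, y0, y1) | S k' => quad4 (seqr k') end.

Theorem bisect : x0 <= x1 -> y0 <= y1 -> P x0 x1 y0 y1.
Proof.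
  intros Hx Hy. apply NNPP. intro HnP.
  assert (Inv : forall k, inv_r (seqr k) k).
  { induction k. unfold inv_r, gA, gB, gC, gD; simpl. repeat split; try lra; auto.
    simpl. apply quad4_step; auto. }
  assert (Mon : forall k, gA (seqr k) <= gA (seqr (S k)) /\ gB (seqr (S k)) <= gB (seqr k) /\ gC (seqr k) <= gC (seqr (S k)) /\ gD (seqr (S k)) <= gD (seqr k)).
  { intros k. simpl. apply (quad4_step (seqr k) k); auto. }
  assert (MonA : forall j m, gA (seqr j) <= gA (seqr (j + m)) /\ gB (seqr (j + m)) <= gB (seqr j) /\ gC (seqr j) <= gC (seqr (j + m)) /\ gD (seqr (j + m)) <= gD (seqr j)).
  { intros j m. induction m. rewrite Nat.add_0_r. lra.
    replace (j + S m)%nat with (S (j + m))%nat by lia. pose proof (Mon (j + m)%nat). lra. }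
  assert (AB : forall j k, gA (seqr j) <= gB (seqr k) /\ gC (seqr j) <= gD (seqr k)).
  { intros j k. destruct (Nat.le_ge_cases j k) as [L|L].
    - replace k with (j + (k - j))%nat by lia. pose proof (MonA j (k - j)%nat).
      destruct (Inv (j + (k - j))%nat) as (_ & I2 & _ & _ & I5 & _). lra.
    - replace j with (k + (j - k))%nat by lia. pose proof (MonA k (j - k)%nat).
      destruct (Inv (k + (j - k))%nat) as (_ & I2 & _ & _ & I5 & _). lra. }
  destruct (completeness (fun x => exists k, x = gA (seqr k))) as [u [Hu1 Hu2]].
  { exists x1. intros x [k ->]. pose proof (AB k O). unfold gB in H; simpl in H. apply H. }
  { exists x0. exists O. reflexivity. }
  destruct (completeness (fun x => exists k, x = gC (seqr k))) as [v [Hv1 Hv2]].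
  { exists y1. intros x [k ->]. pose proof (AB k O). unfold gD in H; simpl in H. apply H. }
  { exists y0. exists O. reflexivity. }
  assert (Ua : forall k, gA (seqr k) <= u) by (intros; apply Hu1; eauto).
  assert (Ub : forall k, u <= gB (seqr k)).
  { intros k. apply Hu2. intros x [j ->]. apply AB. }
  assert (Va : forall k, gC (seqr k) <= v) by (intros; apply Hv1; eauto).
  assert (Vb : forall k, v <= gD (seqr k)).
  { intros k. apply Hv2. intros x [j ->]. apply AB. }
  pose proof (Ua O) as U0; pose proof (Ub O) as U1; pose proof (Va O) as V0; pose proof (Vb O) as V1.
  unfold gA, gB, gC, gD in U0, U1, V0, V1; simpl in U0, U1, V0, V1.
  destruct (Hloc u v ltac:(lra) ltac:(lra)) as [del [Hdel Hd]].
  destruct (archimed (Rmax (Rabs (x1 - x0)) (Rabs (y1 - y0)) / del)) as [Ha _].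
  set (k := Z.to_nat (up (Rmax (Rabs (x1 - x0)) (Rabs (y1 - y0)) / del))).
  assert (Kk : Rmax (Rabs (x1 - x0)) (Rabs (y1 - y0)) / del < 2 ^ k).
  { apply Rlt_le_trans with (IZR (up (Rmax (Rabs (x1 - x0)) (Rabs (y1 - y0)) / del))); auto.
    assert (0 <= Rmax (Rabs (x1 - x0)) (Rabs (y1 - y0)) / del).
    { apply Rdiv_le_0_compat; [|lra]. apply Rle_trans with (Rabs (x1 - x0)). apply Rabs_pos. apply Rmax_l. }
    assert (0 <= up (Rmax (Rabs (x1 - x0)) (Rabs (y1 - y0)) / del))%Z.
    { apply le_IZR. lra. }
    unfold k. rewrite <- (Z2Nat.id (up _)) at 1 by auto. rewrite <- INR_IZR_INZ.
    clear. induction (Z.to_nat _). simpl; lra.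
    rewrite S_INR. simpl. assert (1 <= 2 ^ n) by (apply pow_R1_Rle; lra). lra. }
  destruct (Inv k) as (I1 & I2 & I3 & I4 & I5 & I6 & I7 & I8 & I9).
  assert (P2 : 0 < 2 ^ k) by (apply pow_lt; lra).
  apply I9. apply Hd; auto.
  - rewrite I7. apply div_swap; auto.
    eapply Rle_lt_trans; [|exact Kk]. unfold Rdiv. apply Rmult_le_compat_r. apply Rlt_le, Rinv_0_lt_compat; lra.
    eapply Rle_trans; [apply Rle_abs|apply Rmax_l].
  - rewrite I8. apply div_swap; auto.
    eapply Rle_lt_trans; [|exact Kk]. unfold Rdiv. apply Rmult_le_compat_r. apply Rlt_le, Rinv_0_lt_compat; lra.
    eapply Rle_trans; [apply Rle_abs|apply Rmax_r].
Qed.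
End Bisect.


Lemma bcont_of h a b c d : a <= b -> c <= d ->
  (forall z, a <= fst z <= b -> c <= snd z <= d -> ccont h z) -> bcont h a b c d.
Proof. intros Hab Hcd H. split; intros t Ht; split; apply H; simpl; lra. Qed.

Lemma bbound_of h a b c d B : a <= b -> c <= d ->
  (forall z, a <= fst z <= b -> c <= snd z <= d -> Cmod (h z) <= B) -> bbound h a b c d B.
Proof. intros Hab Hcd H. split; intros t Ht; split; apply H; simpl; lra. Qed.

Lemma Irect_alt h a b c d : a <= b -> c <= d -> bcont h a b c d ->
  Irect h a b c d = Cplus (RI (fun t => Cminus (h (t, c)) (h (t, d))) a b)
                          (Cmult Ci (RI (fun t => Cminus (h (b, t)) (h (a, t))) c d)).
Proof.
  intros Hab Hcd Hh. destruct (bcont_ex _ _ _ _ _ Hab Hcd Hh) as [F1 [F2 [F3 F4]]].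
  rewrite !RI_minus by auto. unfold Irect. ring.
Qed.

Lemma Irect_affine A al a b c d : a <= b -> c <= d ->
  Irect (fun z => Cplus A (Cmult al z)) a b c d = RtoC 0.
Proof.
  intros Hab Hcd. rewrite Irect_alt; auto.
  2:{ apply bcont_of; auto. intros. apply holo_ccont, holo_affine. }
  rewrite (RI_ext _ (fun _ => Cmult al (0, c - d))).
  2:{ intros. destruct A, al. cpair. }
  rewrite (RI_ext (fun t => Cminus _ _) (fun _ => Cmult al (b - a, 0))).
  2:{ intros. destruct A, al. cpair. }
  rewrite !RI_const. destruct al. cpair.
Qed.

Lemma Cmod_sub_le_box (z w : C) : Cmod (Cminus z w) <= Rabs (fst z - fst w) + Rabs (snd z - snd w).
Proof. eapply Rle_trans. apply Cmod_le_sum. simpl. right. reflexivity. Qed.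

Theorem goursat h a b c d : a <= b -> c <= d ->
  (forall z, a <= fst z <= b -> c <= snd z <= d -> holo1_at h z) -> Irect h a b c d = RtoC 0.
Proof.
  intros Hab Hcd Hh.
  assert (Hall : forall e, 0 < e -> Cmod (Irect h a b c d) <= e * ((b - a) + (d - c)) ^ 2).
  { intros e He.
    apply (bisect (fun a' b' c' d' => Cmod (Irect h a' b' c' d') <= e * ((b' - a') + (d' - c')) ^ 2) a b c d); auto.
    - intros a' b' c' d' H1 H2 H3 H4 H5 H6 Q1 Q2 Q3 Q4.
      set (m := (a' + b') / 2) in *. set (n := (c' + d') / 2) in *.
      assert (BC : forall p q r s, a <= p -> p <= q -> q <= b -> c <= r -> r <= s -> s <= d -> bcont h p q r s).
      { intros. apply bcont_of; auto. intros. apply holo_ccont, Hh; lra. }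
      rewrite (split_v h a' m b' c' d') by (unfold m in *; try lra; apply BC; unfold m; lra).
      rewrite (split_h h a' m c' n d') by (unfold m, n in *; try lra; apply BC; unfold m, n; lra).
      rewrite (split_h h m b' c' n d') by (unfold m, n in *; try lra; apply BC; unfold m, n; lra).
      pose proof (Cmod_triangle (Irect h a' m c' n) (Irect h a' m n d')).
      pose proof (Cmod_triangle (Irect h m b' c' n) (Irect h m b' n d')).
      pose proof (Cmod_triangle (Cplus (Irect h a' m c' n) (Irect h a' m n d')) (Cplus (Irect h m b' c' n) (Irect h m b' n d'))).
      unfold m, n in *.
      replace (e * ((b' - a') + (d' - c')) ^ 2) with
        (e * (((a' + b') / 2 - a') + ((c' + d') / 2 - c')) ^ 2 + e * (((a' + b') / 2 - a') + (d' - (c' + d') / 2)) ^ 2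
         + (e * ((b' - (a' + b') / 2) + ((c' + d') / 2 - c')) ^ 2 + e * ((b' - (a' + b') / 2) + (d' - (c' + d') / 2)) ^ 2)) by field.
      lra.
    - intros u v Hu Hv.
      destruct (Hh (u, v) Hu Hv) as [al Hal].
      destruct (Hal (e / 2) ltac:(lra)) as [del [Hdel Hd]].
      exists (del / 2). split; [lra|].
      intros a' b' c' d' H1 H2 H3 H4 H5 H6 H7 H8 W1 W2.
      set (L := fun z => Cplus (Cminus (h (u, v)) (Cmult al (u, v))) (Cmult al z)).
      assert (BC : bcont h a' b' c' d').
      { apply bcont_of; try lra. intros. apply holo_ccont, Hh; lra. }
      assert (BL : bcont L a' b' c' d').
      { apply bcont_of; try lra. intros. apply holo_ccont, holo_affine. }
      replace (Irect h a' b' c' d') with (Cminus (Irect h a' b' c' d') (Irect L a' b' c' d')).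
      2:{ unfold L. rewrite Irect_affine by lra. ring. }
      rewrite <- Irect_minus by (auto; lra).
      replace (e * ((b' - a') + (d' - c')) ^ 2) with (2 * ((b' - a') + (d' - c')) * (e / 2 * ((b' - a') + (d' - c')))) by field.
      apply Irect_bound; try lra.
      + apply bcont_of; try lra. intros. apply holo_ccont, holo_minus.
        apply Hh; lra. apply holo_affine.
      + apply bbound_of; try lra. intros z Hz1 Hz2.
        specialize (Hd (Cminus z (u, v))).
        pose proof (Cmod_sub_le_box z (u, v)). simpl in H.
        assert (Rabs (fst z - u) + Rabs (snd z - v) <= (b' - a') + (d' - c')).
        { assert (Rabs (fst z - u) <= b' - a') by (apply Rabs_le; lra).
          assert (Rabs (snd z - v) <= d' - c') by (apply Rabs_le; lra). lra. }
        replace (Cplus (u, v) (Cminus z (u, v))) with z in Hd by (destruct z; cpair).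
        unfold L.
        replace (Cminus (h z) (Cplus (Cminus (h (u, v)) (Cmult al (u, v))) (Cmult al z)))
          with (Cminus (Cminus (h z) (h (u, v))) (Cmult al (Cminus z (u, v)))) by ring.
        eapply Rle_trans. apply Hd. lra.
        apply Rmult_le_compat_l; lra. }
  pose proof (Cmod_ge_0 (Irect h a b c d)).
  apply Cmod_eq_0. apply Rle_antisym; auto.
  apply Rnot_lt_le. intro Hpos.
  set (W := ((b - a) + (d - c)) ^ 2 + 1).
  assert (0 < W) by (unfold W; pose proof (pow2_ge_0 ((b - a) + (d - c))); lra).
  specialize (Hall (Cmod (Irect h a b c d) / (2 * W)) ltac:(apply Rdiv_lt_0_compat; lra)).
  assert (Cmod (Irect h a b c d) / (2 * W) * ((b - a) + (d - c)) ^ 2 < Cmod (Irect h a b c d)).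
  { apply Rlt_le_trans with (Cmod (Irect h a b c d) / (2 * W) * W).
    apply Rmult_lt_compat_l. apply Rdiv_lt_0_compat; lra. unfold W; lra.
    assert (Cmod (Irect h a b c d) / (2 * W) * W = Cmod (Irect h a b c d) / 2) by (field; lra).
    lra. }
  lra.
Qed.


Theorem grid h x0 x1 x2 x3 y0 y1 y2 y3 :
  x0 <= x1 -> x1 <= x2 -> x2 <= x3 -> y0 <= y1 -> y1 <= y2 -> y2 <= y3 ->
  (forall z, x0 <= fst z <= x3 -> y0 <= snd z <= y3 -> ~ (x1 < fst z < x2 /\ y1 < snd z < y2) -> holo1_at h z) ->
  Irect h x0 x3 y0 y3 = Irect h x1 x2 y1 y2.
Proof.
  intros X1 X2 X3 Y1 Y2 Y3 Hh.
  assert (BC : forall p q r s, x0 <= p -> p <= q -> q <= x3 -> y0 <= r -> r <= s -> s <= y3 ->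
     (forall z, ((p <= fst z <= q /\ (snd z = r \/ snd z = s)) \/ (r <= snd z <= s /\ (fst z = p \/ fst z = q))) ->
        ~ (x1 < fst z < x2 /\ y1 < snd z < y2)) -> bcont h p q r s).
  { intros p q r s P1 P2 P3 P4 P5 P6 Hb. split; intros t Ht; split; apply holo_ccont, Hh; simpl; try lra;
    match goal with |- ~ (x1 < ?a < x2 /\ y1 < ?b < y2) => apply (Hb (a, b)); simpl; auto end. }
  assert (G : forall p q r s, x0 <= p -> p <= q -> q <= x3 -> y0 <= r -> r <= s -> s <= y3 ->
     (forall z, p <= fst z <= q -> r <= snd z <= s -> ~ (x1 < fst z < x2 /\ y1 < snd z < y2)) ->
     Irect h p q r s = RtoC 0).
  { intros p q r s P1 P2 P3 P4 P5 P6 Hb. apply goursat; auto. intros z Z1 Z2. apply Hh; try lra. apply Hb; auto. }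
  rewrite (split_v h x0 x1 x3 y0 y3); try lra.
  2:{ apply BC; try lra. intros z Hz [? ?]. lra. }
  2:{ apply BC; try lra. intros z Hz [? ?]. destruct Hz as [[? [E|E]]|[? [E|E]]]; rewrite E in *; lra. }
  rewrite (split_v h x1 x2 x3 y0 y3); try lra.
  2:{ apply BC; try lra. intros z Hz [? ?]. destruct Hz as [[? [E|E]]|[? [E|E]]]; rewrite E in *; lra. }
  2:{ apply BC; try lra. intros z Hz [? ?]. lra. }
  rewrite (split_h h x1 x2 y0 y1 y3); try lra.
  2:{ apply BC; try lra. intros z Hz [? ?]. lra. }
  2:{ apply BC; try lra. intros z Hz [? ?]. destruct Hz as [[? [E|E]]|[? [E|E]]]; rewrite E in *; lra. }
  rewrite (split_h h x1 x2 y1 y2 y3); try lra.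
  2:{ apply BC; try lra. intros z Hz [? ?]. destruct Hz as [[? [E|E]]|[? [E|E]]]; rewrite E in *; lra. }
  2:{ apply BC; try lra. intros z Hz [? ?]. lra. }
  rewrite (G x0 x1 y0 y3), (G x2 x3 y0 y3), (G x1 x2 y0 y1), (G x1 x2 y2 y3); try lra;
    try (intros z Z1 Z2 [? ?]; lra).
  ring.
Qed.

Lemma int_atan q d : 0 < d -> is_RInt (fun t => d / ((t - q) ^ 2 + d ^ 2)) (q - d) (q + d) (PI / 2).
Proof.
  intros Hd.
  assert (D : forall t, is_derive (fun t => atan ((t - q) / d)) t (d / ((t - q) ^ 2 + d ^ 2))).
  { intros t. auto_derive; auto.
    assert (0 < (t - q) ^ 2 + d ^ 2) by (pose proof (pow2_ge_0 (t - q)); pose proof (pow_lt d 2 Hd); lra).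
    field. split. lra. replace (t + - q) with (t - q) by ring.
    intro E. assert (d * d * (1 + (t - q) * / d * ((t - q) * / d * 1)) = (t - q) ^ 2 + d ^ 2) by (field; lra).
    rewrite E in H0. lra. }
  replace (PI / 2) with (minus ((fun t => atan ((t - q) / d)) (q + d)) ((fun t => atan ((t - q) / d)) (q - d))).
  2:{ simpl. unfold minus, plus, opp; simpl. replace ((q + d - q) / d) with 1 by (field; lra).
      replace ((q - d - q) / d) with (- (1)) by (field; lra). rewrite atan_opp, atan_1. field. }
  apply (is_RInt_derive (V:=R_CompleteNormedModule) (fun t => atan ((t - q) / d))). intros; apply D.
  intros. apply (ex_derive_continuous (V:=R_CompleteNormedModule)). auto_derive.
  pose proof (pow2_ge_0 (x - q)); pose proof (pow_lt d 2 Hd).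
  replace (x + - q) with (x - q) by ring. simpl in *. lra.
Qed.

Lemma int_log q d : 0 < d -> is_RInt (fun t => (t - q) / ((t - q) ^ 2 + d ^ 2)) (q - d) (q + d) 0.
Proof.
  intros Hd.
  assert (D : forall t, is_derive (fun t => ln ((t - q) ^ 2 + d ^ 2) / 2) t ((t - q) / ((t - q) ^ 2 + d ^ 2))).
  { intros t. assert (0 < (t - q) ^ 2 + d ^ 2) by (pose proof (pow2_ge_0 (t - q)); pose proof (pow_lt d 2 Hd); lra).
    auto_derive. replace (t + - q) with (t - q) by ring. simpl in *; lra.
    replace (t + - q) with (t - q) by ring. simpl in *. field. lra. }
  replace 0 with (minus ((fun t => ln ((t - q) ^ 2 + d ^ 2) / 2) (q + d)) ((fun t => ln ((t - q) ^ 2 + d ^ 2) / 2) (q - d))).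
  2:{ simpl. unfold minus, plus, opp; simpl. replace (q + d - q) with d by ring.
      replace (q - d - q) with (- d) by ring. replace (- d * (- d * 1)) with (d * (d * 1)) by ring. ring. }
  apply (is_RInt_derive (V:=R_CompleteNormedModule) (fun t => ln ((t - q) ^ 2 + d ^ 2) / 2)). intros; apply D.
  intros. apply (ex_derive_continuous (V:=R_CompleteNormedModule)). auto_derive.
  pose proof (pow2_ge_0 (x - q)); pose proof (pow_lt d 2 Hd).
  replace (x + - q) with (x - q) by ring. simpl in *. lra.
Qed.

Lemma RI_pair (f : R -> C) fr fi a b lr li :
  is_RInt fr a b lr -> is_RInt fi a b li -> (forall t, f t = (fr t, fi t)) -> RI f a b = (lr, li).
Proof.
  intros H1 H2 E. unfold RI. apply (is_RInt_unique (V:=C_R_CompleteNormedModule)).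
  apply (is_RInt_ext (V:=C_R_NormedModule) (fun t => (fr t, fi t))). intros; rewrite E; auto.
  apply (is_RInt_fct_extend_pair (U:=R_NormedModule) (V:=R_NormedModule)); simpl; auto.
Qed.

Lemma is_RInt_neg (f : R -> R) a b l : is_RInt f a b l -> is_RInt (fun t => - f t) a b (- l).
Proof. intros H. apply is_RInt_opp in H. exact H. Qed.

Lemma int_opp_log q d : 0 < d -> is_RInt (fun t => - (t - q) / ((t - q) ^ 2 + d ^ 2)) (q - d) (q + d) 0.
Proof.
  intros Hd. pose proof (is_RInt_neg _ _ _ _ (int_log q d Hd)) as H. rewrite Ropp_0 in H.
  eapply is_RInt_ext; [|exact H]. intros. simpl. field.
  pose proof (pow2_ge_0 (x - q)); pose proof (pow_lt d 2 Hd); lra.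
Qed.

Lemma int_opp_atan q d : 0 < d -> is_RInt (fun t => - d / ((t - q) ^ 2 + d ^ 2)) (q - d) (q + d) (- (PI / 2)).
Proof.
  intros Hd. pose proof (is_RInt_neg _ _ _ _ (int_atan q d Hd)) as H.
  eapply is_RInt_ext; [|exact H]. intros. simpl. field.
  pose proof (pow2_ge_0 (x - q)); pose proof (pow_lt d 2 Hd); lra.
Qed.

Theorem winding p1 p2 d : 0 < d ->
  Irect (fun z => Cinv (Cminus z (p1, p2))) (p1 - d) (p1 + d) (p2 - d) (p2 + d) = (0, 2 * PI).
Proof.
  intros Hd. unfold Irect.
  assert (Pq : forall s, 0 < s ^ 2 + d ^ 2) by (intros; pose proof (pow2_ge_0 s); pose proof (pow_lt d 2 Hd); lra).
  rewrite (RI_pair _ (fun t => (t - p1) / ((t - p1) ^ 2 + d ^ 2)) (fun t => d / ((t - p1) ^ 2 + d ^ 2)) (p1 - d) (p1 + d) 0 (PI / 2)).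
  2: apply int_log; auto. 2: apply int_atan; auto.
  2:{ intros. unfold Cinv, Cminus, Cplus, Copp; simpl. f_equal; field; specialize (Pq (t - p1)); simpl in Pq; lra. }
  rewrite (RI_pair _ (fun t => (t - p1) / ((t - p1) ^ 2 + d ^ 2)) (fun t => - d / ((t - p1) ^ 2 + d ^ 2)) (p1 - d) (p1 + d) 0 (- (PI / 2))).
  2: apply int_log; auto. 2: apply int_opp_atan; auto.
  2:{ intros. unfold Cinv, Cminus, Cplus, Copp; simpl. f_equal; field; specialize (Pq (t - p1)); simpl in Pq; lra. }
  rewrite (RI_pair _ (fun t => d / ((t - p2) ^ 2 + d ^ 2)) (fun t => - (t - p2) / ((t - p2) ^ 2 + d ^ 2)) (p2 - d) (p2 + d) (PI / 2) 0).
  2: apply int_atan; auto. 2: apply int_opp_log; auto.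
  2:{ intros. unfold Cinv, Cminus, Cplus, Copp; simpl. f_equal; field; specialize (Pq (t - p2)); simpl in Pq; lra. }
  rewrite (RI_pair _ (fun t => - d / ((t - p2) ^ 2 + d ^ 2)) (fun t => - (t - p2) / ((t - p2) ^ 2 + d ^ 2)) (p2 - d) (p2 + d) (- (PI / 2)) 0).
  2: apply int_opp_atan; auto. 2: apply int_opp_log; auto.
  2:{ intros. unfold Cinv, Cminus, Cplus, Copp; simpl. f_equal; field; specialize (Pq (t - p2)); simpl in Pq; lra. }
  cpair.
Qed.


Theorem hole h x0 x3 y0 y3 p1 p2 B r :
  x0 < p1 < x3 -> y0 < p2 < y3 -> 0 < r ->
  (forall z, x0 <= fst z <= x3 -> y0 <= snd z <= y3 -> z <> (p1, p2) -> holo1_at h z) ->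
  (forall z, z <> (p1, p2) -> Rabs (fst z - p1) < r -> Rabs (snd z - p2) < r -> Cmod (h z) <= B) ->
  Irect h x0 x3 y0 y3 = RtoC 0.
Proof.
  intros Hx Hy Hr Hh HB.
  set (m := Rmin (Rmin r (p1 - x0)) (Rmin (x3 - p1) (Rmin (p2 - y0) (y3 - p2)))).
  assert (Hm : 0 < m) by (unfold m; repeat apply Rmin_pos; lra).
  assert (M1 : m <= r /\ m <= p1 - x0 /\ m <= x3 - p1 /\ m <= p2 - y0 /\ m <= y3 - p2).
  { unfold m.
    pose proof (Rmin_l (Rmin r (p1 - x0)) (Rmin (x3 - p1) (Rmin (p2 - y0) (y3 - p2)))).
    pose proof (Rmin_r (Rmin r (p1 - x0)) (Rmin (x3 - p1) (Rmin (p2 - y0) (y3 - p2)))).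
    pose proof (Rmin_l r (p1 - x0)). pose proof (Rmin_r r (p1 - x0)).
    pose proof (Rmin_l (x3 - p1) (Rmin (p2 - y0) (y3 - p2))). pose proof (Rmin_r (x3 - p1) (Rmin (p2 - y0) (y3 - p2))).
    pose proof (Rmin_l (p2 - y0) (y3 - p2)). pose proof (Rmin_r (p2 - y0) (y3 - p2)).
    repeat split; lra. }
  assert (Key : forall dl, 0 < dl -> dl < m -> Cmod (Irect h x0 x3 y0 y3) <= 8 * dl * B).
  { intros dl Hdl Hdm.
    rewrite (grid h x0 (p1 - dl) (p1 + dl) x3 y0 (p2 - dl) (p2 + dl) y3); try lra.
    2:{ intros z Z1 Z2 Z3. apply Hh; auto. intro E. rewrite E in Z3. simpl in Z3. lra. }
    replace (8 * dl * B) with (2 * ((p1 + dl - (p1 - dl)) + (p2 + dl - (p2 - dl))) * B) by ring.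
    apply Irect_bound; try lra.
    - split; intros t Ht; split; apply holo_ccont, Hh; simpl; try lra; intro E; injection E; lra.
    - split; intros t Ht; split; apply HB; simpl; try (intro E; injection E; lra);
        apply Rabs_def1; lra. }
  apply Cmod_eq_0. pose proof (Cmod_ge_0 (Irect h x0 x3 y0 y3)).
  apply Rle_antisym; auto. apply Rnot_lt_le. intro Hp.
  set (dl := Rmin (m / 2) (Cmod (Irect h x0 x3 y0 y3) / (16 * (Rabs B + 1)))).
  assert (P1 : 0 < dl) by (unfold dl; apply Rmin_pos; [lra|apply Rdiv_lt_0_compat; [lra|pose proof (Rabs_pos B); lra]]).
  assert (P2 : dl <= m / 2) by apply Rmin_l.
  assert (P3 : dl <= Cmod (Irect h x0 x3 y0 y3) / (16 * (Rabs B + 1))) by apply Rmin_r.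
  specialize (Key dl P1 ltac:(lra)).
  assert (8 * dl * B <= 8 * dl * (Rabs B + 1)).
  { apply Rmult_le_compat_l. lra. pose proof (Rle_abs B). lra. }
  assert (8 * dl * (Rabs B + 1) <= Cmod (Irect h x0 x3 y0 y3) / 2).
  { pose proof (Rabs_pos B).
    apply Rle_trans with (8 * (Cmod (Irect h x0 x3 y0 y3) / (16 * (Rabs B + 1))) * (Rabs B + 1)).
    apply Rmult_le_compat_r; lra. right. field. lra. }
  lra.
Qed.

Definition bnear (h : C -> C) (p1 p2 : R) : Prop :=
  exists B r, 0 < r /\ forall z, z <> (p1, p2) -> Rabs (fst z - p1) < r -> Rabs (snd z - p2) < r -> Cmod (h z) <= B.

Lemma two_v h x0 x3 y0 y3 p1 p2 q1 q2 :
  x0 < p1 < x3 -> y0 < p2 < y3 -> x0 < q1 < x3 -> y0 < q2 < y3 -> p1 < q1 ->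
  (forall z, x0 <= fst z <= x3 -> y0 <= snd z <= y3 -> z <> (p1, p2) -> z <> (q1, q2) -> holo1_at h z) ->
  bnear h p1 p2 -> bnear h q1 q2 -> Irect h x0 x3 y0 y3 = RtoC 0.
Proof.
  intros P1 P2 Q1 Q2 L Hh [B1 [r1 [R1 HB1]]] [B2 [r2 [R2 HB2]]].
  set (m := (p1 + q1) / 2).
  rewrite (split_v h x0 m x3 y0 y3); unfold m; try lra.
  - rewrite (hole h x0 ((p1 + q1) / 2) y0 y3 p1 p2 B1 r1); try lra; auto.
    rewrite (hole h ((p1 + q1) / 2) x3 y0 y3 q1 q2 B2 r2); try lra; auto.
    + ring.
    + intros z Z1 Z2 Z3. apply Hh; try lra; auto. intro E; rewrite E in Z1; simpl in Z1; lra.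
    + intros z Z1 Z2 Z3. apply Hh; try lra; auto. intro E; rewrite E in Z1; simpl in Z1; lra.
  - split; intros t Ht; split; apply holo_ccont, Hh; simpl; try lra; intro E; injection E; lra.
  - split; intros t Ht; split; apply holo_ccont, Hh; simpl; try lra; intro E; injection E; lra.
Qed.

Lemma two_h h x0 x3 y0 y3 p1 p2 q1 q2 :
  x0 < p1 < x3 -> y0 < p2 < y3 -> x0 < q1 < x3 -> y0 < q2 < y3 -> p2 < q2 ->
  (forall z, x0 <= fst z <= x3 -> y0 <= snd z <= y3 -> z <> (p1, p2) -> z <> (q1, q2) -> holo1_at h z) ->
  bnear h p1 p2 -> bnear h q1 q2 -> Irect h x0 x3 y0 y3 = RtoC 0.
Proof.
  intros P1 P2 Q1 Q2 L Hh [B1 [r1 [R1 HB1]]] [B2 [r2 [R2 HB2]]].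
  set (m := (p2 + q2) / 2).
  rewrite (split_h h x0 x3 y0 m y3); unfold m; try lra.
  - rewrite (hole h x0 x3 y0 ((p2 + q2) / 2) p1 p2 B1 r1); try lra; auto.
    rewrite (hole h x0 x3 ((p2 + q2) / 2) y3 q1 q2 B2 r2); try lra; auto.
    + ring.
    + intros z Z1 Z2 Z3. apply Hh; try lra; auto. intro E; rewrite E in Z2; simpl in Z2; lra.
    + intros z Z1 Z2 Z3. apply Hh; try lra; auto. intro E; rewrite E in Z2; simpl in Z2; lra.
  - split; intros t Ht; split; apply holo_ccont, Hh; simpl; try lra; intro E; injection E; lra.
  - split; intros t Ht; split; apply holo_ccont, Hh; simpl; try lra; intro E; injection E; lra.
Qed.

Theorem two_holes h x0 x3 y0 y3 p1 p2 q1 q2 :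
  x0 < p1 < x3 -> y0 < p2 < y3 -> x0 < q1 < x3 -> y0 < q2 < y3 -> (p1, p2) <> (q1, q2) ->
  (forall z, x0 <= fst z <= x3 -> y0 <= snd z <= y3 -> z <> (p1, p2) -> z <> (q1, q2) -> holo1_at h z) ->
  bnear h p1 p2 -> bnear h q1 q2 -> Irect h x0 x3 y0 y3 = RtoC 0.
Proof.
  intros P1 P2 Q1 Q2 N Hh Bp Bq.
  destruct (Rtotal_order p1 q1) as [L|[Eq1|L]].
  - apply (two_v h x0 x3 y0 y3 p1 p2 q1 q2); auto.
  - subst q1. destruct (Rtotal_order p2 q2) as [L|[E2|L]].
    + apply (two_h h x0 x3 y0 y3 p1 p2 p1 q2); auto.
    + rewrite E2 in N. tauto.
    + apply (two_h h x0 x3 y0 y3 p1 q2 p1 p2); auto.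
  - apply (two_v h x0 x3 y0 y3 q1 q2 p1 p2); auto.

Qed.


Lemma winding_gen h a x0 x3 y0 y3 :
  x0 < fst a < x3 -> y0 < snd a < y3 ->
  (forall z, h z = Cinv (Cminus z a)) ->
  Irect h x0 x3 y0 y3 = (0, 2 * PI).
Proof.
  intros Ha1 Ha2 Eh. destruct a as [a1 a2]. simpl in *.
  set (dl := Rmin (Rmin (a1 - x0) (x3 - a1)) (Rmin (a2 - y0) (y3 - a2)) / 2).
  assert (Hd : 0 < dl) by (unfold dl; apply Rdiv_lt_0_compat; [repeat apply Rmin_pos; lra|lra]).
  assert (M : dl < a1 - x0 /\ dl < x3 - a1 /\ dl < a2 - y0 /\ dl < y3 - a2).
  { unfold dl.
    pose proof (Rmin_l (Rmin (a1 - x0) (x3 - a1)) (Rmin (a2 - y0) (y3 - a2))).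
    pose proof (Rmin_r (Rmin (a1 - x0) (x3 - a1)) (Rmin (a2 - y0) (y3 - a2))).
    pose proof (Rmin_l (a1 - x0) (x3 - a1)). pose proof (Rmin_r (a1 - x0) (x3 - a1)).
    pose proof (Rmin_l (a2 - y0) (y3 - a2)). pose proof (Rmin_r (a2 - y0) (y3 - a2)).
    repeat split; lra. }
  rewrite (grid h x0 (a1 - dl) (a1 + dl) x3 y0 (a2 - dl) (a2 + dl) y3); try lra.
  - rewrite (Irect_ext h (fun z => Cinv (Cminus z (a1, a2)))) by (try lra; auto).
    apply winding; auto.
  - intros z Z1 Z2 Z3. apply (holo_ext (fun z => Cinv (Cminus z (a1, a2)))). intros; auto.
    apply holo_inv_shift. intro E. rewrite E in Z3. simpl in Z3. lra.
Qed.

Section Cauchy.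
Variable phi : C -> C.
Variable M : R.
Hypothesis Hphi : forall z, z <> RtoC 0 -> holo1_at phi z.
Hypothesis HM : forall z, z <> RtoC 0 -> Cmod (phi z) <= M.

Lemma RtoC0_pair : RtoC 0 = (0, 0).
Proof. reflexivity. Qed.

Lemma bd_ne (rho : R) (z a : C) : Rabs (fst a) < rho -> Rabs (snd a) < rho ->
  (Rabs (fst z) = rho \/ Rabs (snd z) = rho) -> z <> a.
Proof. intros H1 H2 [E|E] Ez; subst z; lra. Qed.

Lemma on_bd rho (t : R) : 0 < rho -> -rho <= t <= rho ->
  Rabs (fst (t, -rho)) = rho \/ Rabs (snd (t, -rho)) = rho.
Proof. intros. right. simpl. rewrite Rabs_Ropp. apply Rabs_right. lra. Qed.

Lemma bcont_square h rho : 0 < rho ->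
  (forall z, (Rabs (fst z) = rho \/ Rabs (snd z) = rho) -> Rabs (fst z) <= rho -> Rabs (snd z) <= rho -> ccont h z) ->
  bcont h (-rho) rho (-rho) rho.
Proof.
  intros Hr H. split; intros t Ht; split; apply H; simpl;
    repeat rewrite Rabs_Ropp; repeat rewrite (Rabs_right rho) by lra; auto; try (apply Rabs_le; lra); lra.
Qed.

Lemma bbound_square h rho B : 0 < rho ->
  (forall z, (Rabs (fst z) = rho \/ Rabs (snd z) = rho) -> Rabs (fst z) <= rho -> Rabs (snd z) <= rho -> Cmod (h z) <= B) ->
  bbound h (-rho) rho (-rho) rho B.
Proof.
  intros Hr H. split; intros t Ht; split; apply H; simpl;
    repeat rewrite Rabs_Ropp; repeat rewrite (Rabs_right rho) by lra; auto; try (apply Rabs_le; lra); lra.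
Qed.

Lemma fst_snd_le_Cmod z : Rabs (fst z) <= Cmod z /\ Rabs (snd z) <= Cmod z.
Proof. split; [apply Rabs_fst_le|apply Rabs_snd_le]. Qed.

Theorem cauchy_sq (a : C) (rho : R) : a <> RtoC 0 -> Rabs (fst a) < rho -> Rabs (snd a) < rho ->
  Irect (fun z => Cmult (phi z) (Cinv (Cminus z a))) (-rho) rho (-rho) rho = Cmult (0, 2 * PI) (phi a).
Proof.
  intros Ha H1 H2.
  assert (Hr : 0 < rho) by (pose proof (Rabs_pos (fst a)); lra).
  assert (A0 : 0 < Cmod a) by (apply Cmod_gt_0; auto).
  set (g := fun z => Cmult (Cminus (phi z) (phi a)) (Cinv (Cminus z a))).
  set (w := fun z => Cinv (Cminus z a)).
  assert (NZ : forall z, (Rabs (fst z) = rho \/ Rabs (snd z) = rho) -> z <> RtoC 0 /\ z <> a).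
  { intros z Hz. split.
    - apply (bd_ne rho); auto. simpl. rewrite Rabs_R0. lra. simpl. rewrite Rabs_R0; lra.
    - apply (bd_ne rho); auto. }
  assert (Bg : bcont g (-rho) rho (-rho) rho).
  { apply bcont_square; auto. intros z Hz _ _. destruct (NZ z Hz).
    apply holo_ccont. unfold g. apply holo_mult. apply holo_minus; auto. apply holo_const.
    apply holo_inv_shift; auto. }
  assert (Bw : bcont w (-rho) rho (-rho) rho).
  { apply bcont_square; auto. intros z Hz _ _. destruct (NZ z Hz).
    apply holo_ccont. unfold w. apply holo_inv_shift; auto. }
  rewrite (Irect_ext _ (fun z => Cplus (g z) (Cmult (phi a) (w z)))) by (try lra; intros; unfold g, w; ring).
  assert (Bw2 : bcont (fun z => Cmult (phi a) (w z)) (-rho) rho (-rho) rho).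
  { apply bcont_square; auto. intros z Hz _ _. destruct (NZ z Hz).
    apply holo_ccont. unfold w. apply holo_scal, holo_inv_shift; auto. }
  rewrite Irect_plus by (try lra; auto).
  rewrite Irect_Cmult by (try lra; auto).
  assert (Hpa : a = (fst a, snd a)) by (destruct a; reflexivity).
  assert (Ig : Irect g (-rho) rho (-rho) rho = RtoC 0).
  { apply (two_holes g (-rho) rho (-rho) rho 0 0 (fst a) (snd a)).
    - lra.
    - lra.
    - pose proof (Rabs_def2 _ _ H1). lra.
    - pose proof (Rabs_def2 _ _ H2). lra.
    - rewrite <- Hpa. intro E. apply Ha. rewrite <- E. reflexivity.
    - intros z _ _ Z1 Z2. rewrite <- Hpa in Z2. unfold g. apply holo_mult.
      apply holo_minus. apply Hphi. auto. apply holo_const. apply holo_inv_shift; auto.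
    -
      exists ((M + Cmod (phi a)) * (2 / Cmod a)), (Cmod a / 4). split; [lra|].
      intros z Z1 Z2 Z3. rewrite Rminus_0_r in Z2, Z3.
      assert (Cmod z < Cmod a / 2) by (pose proof (Cmod_le_sum z); lra).
      assert (Za : Cmod a / 2 <= Cmod (Cminus z a)).
      { rewrite Cmod_minus_sym. pose proof (Cmod_triangle_minus a z). lra. }
      unfold g. rewrite Cmod_mult, Cmod_inv.
      2:{ intro E. rewrite E, Cmod_0 in Za. lra. }
      apply Rmult_le_compat.
      + apply Cmod_ge_0.
      + apply Rlt_le, Rinv_0_lt_compat. lra.
      + unfold Cminus. eapply Rle_trans. apply Cmod_triangle. rewrite Cmod_opp.
        assert (Cmod (phi z) <= M) by (apply HM; rewrite RtoC0_pair; auto). lra.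
      + replace (2 / Cmod a) with (/ (Cmod a / 2)) by (field; lra).
        apply Rinv_le_contravar; lra.
    -
      destruct (Hphi a Ha) as [al Hal]. destruct (Hal 1 Rlt_0_1) as [dd [Hdd Hd]].
      exists (Cmod al + 1), (dd / 2). split; [lra|].
      intros z Z1 Z2 Z3. rewrite <- Hpa in Z1.
      assert (Zd : Cmod (Cminus z a) < dd).
      { pose proof (Cmod_le_sum (Cminus z a)). simpl in H. unfold Rminus in Z2, Z3. lra. }
      assert (Zp : 0 < Cmod (Cminus z a)).
      { apply Cmod_gt_0. intro E. apply Z1.
        apply injective_projections; [pose proof (f_equal fst E) as E1 | pose proof (f_equal snd E) as E1]; simpl in *; lra. }
      specialize (Hd (Cminus z a) Zd). replace (Cplus a (Cminus z a)) with z in Hd by cpair.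
      unfold g. rewrite Cmod_mult, Cmod_inv by (intro E; rewrite E, Cmod_0 in Zp; lra).
      assert (Cmod (Cminus (phi z) (phi a)) <= (Cmod al + 1) * Cmod (Cminus z a)).
      { pose proof (Cmod_triangle (Cminus (Cminus (phi z) (phi a)) (Cmult al (Cminus z a))) (Cmult al (Cminus z a))).
        replace (Cplus (Cminus (Cminus (phi z) (phi a)) (Cmult al (Cminus z a))) (Cmult al (Cminus z a)))
          with (Cminus (phi z) (phi a)) in H by ring.
        rewrite Cmod_mult in H. lra. }
      apply Rle_trans with ((Cmod al + 1) * Cmod (Cminus z a) * / Cmod (Cminus z a)).
      apply Rmult_le_compat_r; auto. apply Rlt_le, Rinv_0_lt_compat; auto.
      right. field. lra. }
  rewrite Ig.
  pose proof (Rabs_def2 _ _ H1). pose proof (Rabs_def2 _ _ H2).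
  rewrite (winding_gen w a); try lra; try (intros; reflexivity).
  ring.
Qed.

Lemma Cmod_2PIi z : Cmod (Cmult (0, 2 * PI) z) = 2 * PI * Cmod z.
Proof.
  replace (0, 2 * PI) with (Cmult Ci (RtoC (2 * PI))) by cpair.
  rewrite !Cmod_mult, Cmod_Ci, Cmod_R, Rabs_right. ring.
  pose proof PI2_3_2. lra.
Qed.

Theorem liouville_Cstar a b : a <> RtoC 0 -> b <> RtoC 0 -> phi a = phi b.
Proof.
  intros Ha Hb.
  destruct (Req_dec (Cmod (Cminus (phi a) (phi b))) 0) as [E|Hne].
  { apply Cmod_eq_0 in E. replace (phi a) with (Cplus (Cminus (phi a) (phi b)) (phi b)) by ring.
    rewrite E. ring. }
  exfalso. set (Dd := Cmod (Cminus (phi a) (phi b))).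
  assert (HD : 0 < Dd) by (pose proof (Cmod_ge_0 (Cminus (phi a) (phi b))); unfold Dd in *; lra).
  set (Mm := Rabs M). assert (Mm0 : 0 <= Mm) by apply Rabs_pos.
  set (ab := Cmod (Cminus a b)). assert (ab0 : 0 <= ab) by apply Cmod_ge_0.
  set (K := 16 * (Mm + 1) * (ab + 1) / Dd).
  assert (K0 : 0 < K) by (unfold K; apply Rdiv_lt_0_compat; nra).
  set (rho := 2 * (Cmod a + Cmod b) + 1 + K).
  pose proof (Cmod_ge_0 a). pose proof (Cmod_ge_0 b).
  assert (Hr : 0 < rho) by (unfold rho; lra).
  destruct (fst_snd_le_Cmod a) as [A1 A2]. destruct (fst_snd_le_Cmod b) as [B1 B2].
  assert (Ca := cauchy_sq a rho Ha ltac:(unfold rho; lra) ltac:(unfold rho; lra)).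
  assert (Cb := cauchy_sq b rho Hb ltac:(unfold rho; lra) ltac:(unfold rho; lra)).
  assert (Bd : forall z, (Rabs (fst z) = rho \/ Rabs (snd z) = rho) ->
     rho <= Cmod z /\ rho / 2 <= Cmod (Cminus z a) /\ rho / 2 <= Cmod (Cminus z b) /\ z <> RtoC 0).
  { intros z Hz. destruct (fst_snd_le_Cmod z).
    assert (Rz : rho <= Cmod z) by (destruct Hz; lra).
    pose proof (Cmod_triangle_minus z a). pose proof (Cmod_triangle_minus z b).
    repeat split; try (unfold rho in *; lra).
    intro E. rewrite E, Cmod_0 in Rz. lra. }
  assert (NE : forall z, Cmod z <> 0 -> z <> RtoC 0) by (intros z Hz E; rewrite E, Cmod_0 in Hz; auto).
  assert (Bc : forall c, Cmod c < rho / 2 -> bcont (fun z => Cmult (phi z) (Cinv (Cminus z c))) (-rho) rho (-rho) rho).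
  { intros c Hc. apply bcont_square; auto. intros z Hz _ _. destruct (Bd z Hz) as (Q1 & Q2 & Q3 & Q4).
    apply holo_ccont. apply holo_mult. apply Hphi; auto. apply holo_inv_shift.
    intro E. rewrite E in Q1. lra. }
  assert (Eq : Irect (fun z => Cminus (Cmult (phi z) (Cinv (Cminus z a))) (Cmult (phi z) (Cinv (Cminus z b)))) (-rho) rho (-rho) rho
               = Cmult (0, 2 * PI) (Cminus (phi a) (phi b))).
  { rewrite Irect_minus; try lra. rewrite Ca, Cb. ring.
    apply Bc; unfold rho; lra. apply Bc; unfold rho; lra. }
  assert (Bnd : Cmod (Irect (fun z => Cminus (Cmult (phi z) (Cinv (Cminus z a))) (Cmult (phi z) (Cinv (Cminus z b)))) (-rho) rho (-rho) rho)
     <= 2 * ((rho - - rho) + (rho - - rho)) * (Mm * ab * (2 / rho) * (2 / rho))).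
  { apply Irect_bound; try lra.
    - apply bcont_square; auto. intros z Hz _ _. destruct (Bd z Hz) as (Q1 & Q2 & Q3 & Q4).
      apply holo_ccont. apply holo_minus; apply holo_mult; try apply Hphi; auto; apply holo_inv_shift;
      intro E; rewrite E in Q1; unfold rho in Q1; lra.
    - apply bbound_square; auto. intros z Hz _ _. destruct (Bd z Hz) as (Q1 & Q2 & Q3 & Q4).
      assert (Za : Cminus z a <> RtoC 0) by (apply NE; lra).
      assert (Zb : Cminus z b <> RtoC 0) by (apply NE; lra).
      replace (Cminus (Cmult (phi z) (Cinv (Cminus z a))) (Cmult (phi z) (Cinv (Cminus z b))))
        with (Cmult (Cmult (phi z) (Cminus a b)) (Cmult (Cinv (Cminus z a)) (Cinv (Cminus z b)))).
      2:{ field. split; auto. }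
      rewrite !Cmod_mult, !Cmod_inv by auto. fold ab.
      assert (Cmod (phi z) <= Mm) by (eapply Rle_trans; [apply HM; auto|apply Rle_abs]).
      assert (/ Cmod (Cminus z a) <= 2 / rho).
      { replace (2 / rho) with (/ (rho / 2)) by (field; lra). apply Rinv_le_contravar; lra. }
      assert (/ Cmod (Cminus z b) <= 2 / rho).
      { replace (2 / rho) with (/ (rho / 2)) by (field; lra). apply Rinv_le_contravar; lra. }
      assert (0 <= / Cmod (Cminus z a)) by (apply Rlt_le, Rinv_0_lt_compat; lra).
      assert (0 <= / Cmod (Cminus z b)) by (apply Rlt_le, Rinv_0_lt_compat; lra).
      pose proof (Cmod_ge_0 (phi z)).
      replace (Mm * ab * (2 / rho) * (2 / rho)) with (Mm * ab * ((2 / rho) * (2 / rho))) by ring.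
      apply Rmult_le_compat. apply Rmult_le_pos; auto. apply Rmult_le_pos; auto.
      apply Rmult_le_compat_r; auto. apply Rmult_le_compat; auto. }
  rewrite Eq, Cmod_2PIi in Bnd. fold Dd in Bnd.
  replace (2 * ((rho - - rho) + (rho - - rho)) * (Mm * ab * (2 / rho) * (2 / rho))) with (32 * Mm * ab / rho) in Bnd by (field; lra).
  assert (K <= rho) by (unfold rho; lra).
  assert (32 * Mm * ab / rho <= 32 * Mm * ab / K).
  { unfold Rdiv. apply Rmult_le_compat_l. nra. apply Rinv_le_contravar; auto. }
  assert (32 * Mm * ab / K < 2 * Dd).
  { unfold K. replace (32 * Mm * ab / (16 * (Mm + 1) * (ab + 1) / Dd)) with (2 * Dd * (Mm * ab / ((Mm + 1) * (ab + 1)))) by (field; nra).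
    assert (Mm * ab / ((Mm + 1) * (ab + 1)) < 1).
    { apply (Rmult_lt_reg_r ((Mm + 1) * (ab + 1))). nra. unfold Rdiv. rewrite Rmult_assoc, Rinv_l by nra. nra. }
    nra. }
  pose proof PI2_3_2. nra.
Qed.
End Cauchy.


Lemma bernoulli c n : 1 < c -> 1 + INR n * (c - 1) <= c ^ n.
Proof.
  intros Hc. induction n. simpl. lra.
  rewrite S_INR. simpl. assert (1 <= c ^ n) by (apply pow_R1_Rle; lra). nra.
Qed.

Lemma pow_large c X : 1 < c -> exists n, X <= c ^ n.
Proof.
  intros Hc. destruct (archimed (Rabs X / (c - 1))) as [H _].
  exists (Z.to_nat (up (Rabs X / (c - 1)))).
  pose proof (bernoulli c (Z.to_nat (up (Rabs X / (c - 1)))) Hc).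
  assert (0 <= Rabs X / (c - 1)) by (apply Rdiv_le_0_compat; [apply Rabs_pos|lra]).
  assert (0 <= up (Rabs X / (c - 1)))%Z by (apply le_IZR; lra).
  rewrite INR_IZR_INZ, Z2Nat.id in H0 by auto.
  assert (Rabs X <= IZR (up (Rabs X / (c - 1))) * (c - 1)).
  { apply Rle_trans with (Rabs X / (c - 1) * (c - 1)). right; field; lra.
    apply Rmult_le_compat_r; lra. }
  pose proof (Rle_abs X). lra.
Qed.

Section Const.
Variable phi : C -> C.
Variable c : R.
Hypothesis hc : 1 < c.
Hypothesis Hphi : forall z, z <> RtoC 0 -> holo1_at phi z.
Hypothesis Hinv : forall z, z <> RtoC 0 -> phi (Cmult (RtoC c) z) = phi z.

Lemma ann_bounded : exists M, forall z, 1 <= Cmod z <= c -> Cmod (phi z) <= M.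
Proof.
  assert (Hb : exists M, forall z, -c <= fst z <= c -> -c <= snd z <= c -> 1 <= Cmod z -> Cmod (phi z) <= M).
  { apply (bisect (fun a b c' d => exists M, forall z, a <= fst z <= b -> c' <= snd z <= d -> 1 <= Cmod z -> Cmod (phi z) <= M)); try lra.
    - intros a b c' d _ _ _ _ _ _ [M1 F1] [M2 F2] [M3 F3] [M4 F4].
      exists (Rmax (Rmax M1 M2) (Rmax M3 M4)). intros z Z1 Z2 Z3.
      pose proof (Rmax_l (Rmax M1 M2) (Rmax M3 M4)). pose proof (Rmax_r (Rmax M1 M2) (Rmax M3 M4)).
      pose proof (Rmax_l M1 M2). pose proof (Rmax_r M1 M2). pose proof (Rmax_l M3 M4). pose proof (Rmax_r M3 M4).
      destruct (Rle_lt_dec (fst z) ((a + b) / 2)); destruct (Rle_lt_dec (snd z) ((c' + d) / 2)).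
      + pose proof (F1 z ltac:(lra) ltac:(lra) Z3). lra.
      + pose proof (F3 z ltac:(lra) ltac:(lra) Z3). lra.
      + pose proof (F2 z ltac:(lra) ltac:(lra) Z3). lra.
      + pose proof (F4 z ltac:(lra) ltac:(lra) Z3). lra.
    - intros u v Hu Hv.
      destruct (Rlt_le_dec (Cmod (u, v)) 1) as [Lt|Ge].
      + exists ((1 - Cmod (u, v)) / 2). split; [lra|].
        intros a b c' d H1 H2 H3 H4 H5 H6 H7 H8 W1 W2. exists 0. intros z Z1 Z2 Z3. exfalso.
        pose proof (Cmod_sub_le_box z (u, v)). simpl in H.
        pose proof (Cmod_triangle (Cminus z (u, v)) (u, v)).
        replace (Cplus (Cminus z (u, v)) (u, v)) with z in H0 by (destruct z; cpair).
        assert (Rabs (fst z - u) <= b - a) by (apply Rabs_le; lra).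
        assert (Rabs (snd z - v) <= d - c') by (apply Rabs_le; lra).
        lra.
      + assert (Nz : (u, v) <> RtoC 0) by (intro E; rewrite E, Cmod_0 in Ge; lra).
        destruct (holo_ccont _ _ (Hphi _ Nz) 1 Rlt_0_1) as [dd [Hdd Hd]].
        exists (dd / 2). split; [lra|].
        intros a b c' d H1 H2 H3 H4 H5 H6 H7 H8 W1 W2. exists (Cmod (phi (u, v)) + 1). intros z Z1 Z2 Z3.
        pose proof (Cmod_sub_le_box z (u, v)). simpl in H.
        assert (Rabs (fst z - u) <= b - a) by (apply Rabs_le; lra).
        assert (Rabs (snd z - v) <= d - c') by (apply Rabs_le; lra).
        specialize (Hd z ltac:(lra)).
        pose proof (Cmod_triangle (Cminus (phi z) (phi (u, v))) (phi (u, v))) as T.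
        replace (Cplus (Cminus (phi z) (phi (u, v))) (phi (u, v))) with (phi z) in T by ring.
        lra. }
  destruct Hb as [M HM]. exists M. intros z [Z1 Z2]. apply HM; auto.
  - destruct (fst_snd_le_Cmod z). pose proof (Rabs_def2 (fst z) (c + 1)). apply Rabs_le_between. lra.
  - destruct (fst_snd_le_Cmod z). apply Rabs_le_between. lra.
Qed.

Lemma Cmod_cz z : Cmod (Cmult (RtoC c) z) = c * Cmod z.
Proof. rewrite Cmod_mult, Cmod_R, Rabs_right by lra. reflexivity. Qed.

Lemma inv_div z : z <> RtoC 0 -> phi (Cmult (RtoC (/ c)) z) = phi z.
Proof.
  intros Hz. assert (Hz' : Cmult (RtoC (/ c)) z <> RtoC 0).
  { intro E. assert (Cmod (Cmult (RtoC (/ c)) z) = 0) by (rewrite E; apply Cmod_0).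
    rewrite Cmod_mult, Cmod_R, Rabs_right in H. apply Cmod_gt_0 in Hz.
    assert (0 < / c) by (apply Rinv_0_lt_compat; lra). nra.
    apply Rle_ge, Rlt_le, Rinv_0_lt_compat; lra. }
  rewrite <- (Hinv _ Hz'). f_equal. destruct z as [z1 z2].
  apply injective_projections; simpl; field; lra.
Qed.

Lemma reduce_ann z : z <> RtoC 0 -> exists z', 1 <= Cmod z' <= c /\ phi z' = phi z.
Proof.
  intros Hz. assert (P := Cmod_gt_0 z). apply P in Hz as Zp. clear P.
  destruct (Rle_lt_dec 1 (Cmod z)) as [Ge|Lt].
  - destruct (pow_large c (Cmod z) hc) as [n Hn].
    revert z Hz Zp Ge Hn. induction n; intros z Hz Zp Ge Hn.
    + exists z. simpl in Hn. split; [lra|auto].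
    + destruct (Rle_lt_dec (Cmod z) c) as [L|L].
      * exists z. split; [lra|auto].
      * set (z' := Cmult (RtoC (/ c)) z).
        assert (Cz : Cmod z' = Cmod z / c).
        { unfold z'. rewrite Cmod_mult, Cmod_R, Rabs_right. unfold Rdiv; ring.
          apply Rle_ge, Rlt_le, Rinv_0_lt_compat; lra. }
        assert (Hz' : z' <> RtoC 0) by (intro E; rewrite E, Cmod_0 in Cz; assert (0 < Cmod z / c) by (apply Rdiv_lt_0_compat; lra); lra).
        destruct (IHn z' Hz').
        { rewrite Cz. apply Rdiv_lt_0_compat; lra. }
        { rewrite Cz. apply (Rmult_le_reg_r c); [lra|]. unfold Rdiv. rewrite Rmult_assoc, Rinv_l by lra. lra. }
        { rewrite Cz. apply (Rmult_le_reg_r c); [lra|]. unfold Rdiv. rewrite Rmult_assoc, Rinv_l by lra.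
          simpl in Hn. lra. }
        exists x. destruct H. split; auto. rewrite H0. unfold z'. apply inv_div; auto.
  - destruct (pow_large c (/ Cmod z) hc) as [n Hn].
    revert z Hz Zp Lt Hn. induction n; intros z Hz Zp Lt Hn.
    + exfalso. simpl in Hn. assert (1 < / Cmod z).
      { rewrite <- Rinv_1. apply Rinv_lt_contravar; lra. } lra.
    + set (z' := Cmult (RtoC c) z).
      assert (Cz : Cmod z' = c * Cmod z) by apply Cmod_cz.
      assert (Hz' : z' <> RtoC 0) by (intro E; rewrite E, Cmod_0 in Cz; nra).
      destruct (Rle_lt_dec 1 (Cmod z')) as [Ge|Lt'].
      * exists z'. split. split; auto. rewrite Cz. nra. apply Hinv; auto.
      * destruct (IHn z' Hz') as [x [Hx Ex]]; auto.
        { rewrite Cz. nra. }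
        { rewrite Cz. rewrite Rinv_mult. simpl in Hn.
          apply (Rmult_le_reg_l c); [lra|]. rewrite <- Rmult_assoc, Rinv_r, Rmult_1_l by lra.
          exact Hn. }
        exists x. split; auto. rewrite Ex. apply Hinv; auto.
Qed.

Theorem const_Cstar a b : a <> RtoC 0 -> b <> RtoC 0 -> phi a = phi b.
Proof.
  destruct ann_bounded as [M HM].
  apply (liouville_Cstar phi M Hphi).
  intros z Hz. destruct (reduce_ann z Hz) as [z' [Hz' E]]. rewrite <- E. auto.
Qed.
End Const.


Lemma holo2_aff f u0 v0 al be s0 :
  holo2_at f (Cplus u0 (Cmult al s0)) (Cplus v0 (Cmult be s0)) ->
  holo1_at (fun s => f (Cplus u0 (Cmult al s)) (Cplus v0 (Cmult be s))) s0.
Proof.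
  intros [a [b Hab]]. exists (Cplus (Cmult a al) (Cmult b be)). intros e He.
  set (S := Cmod al + Cmod be + 1).
  assert (S0 : 1 <= S) by (unfold S; pose proof (Cmod_ge_0 al); pose proof (Cmod_ge_0 be); lra).
  destruct (Hab (e / S) ltac:(apply Rdiv_lt_0_compat; lra)) as [d [Hd Hd2]].
  exists (d / S). split. apply Rdiv_lt_0_compat; lra.
  intros h Hh.
  assert (Ha : Cmod (Cmult al h) < d).
  { rewrite Cmod_mult. pose proof (Cmod_ge_0 h). pose proof (Cmod_ge_0 al).
    apply Rle_lt_trans with (S * Cmod h). apply Rmult_le_compat_r; [apply Cmod_ge_0| unfold S; pose proof (Cmod_ge_0 be); lra].
    apply Rlt_le_trans with (S * (d / S)). apply Rmult_lt_compat_l; lra. right; field; lra. }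
  assert (Hb : Cmod (Cmult be h) < d).
  { rewrite Cmod_mult. pose proof (Cmod_ge_0 h). pose proof (Cmod_ge_0 be).
    apply Rle_lt_trans with (S * Cmod h). apply Rmult_le_compat_r; [apply Cmod_ge_0| unfold S; pose proof (Cmod_ge_0 al); pose proof (Cmod_ge_0 be); lra].
    apply Rlt_le_trans with (S * (d / S)). apply Rmult_lt_compat_l; lra. right; field; lra. }
  specialize (Hd2 _ _ Ha Hb).
  replace (Cplus u0 (Cmult al (Cplus s0 h))) with (Cplus (Cplus u0 (Cmult al s0)) (Cmult al h)) by ring.
  replace (Cplus v0 (Cmult be (Cplus s0 h))) with (Cplus (Cplus v0 (Cmult be s0)) (Cmult be h)) by ring.
  replace (Cmult (Cplus (Cmult a al) (Cmult b be)) h) with (Cplus (Cmult a (Cmult al h)) (Cmult b (Cmult be h))) by ring.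
  eapply Rle_trans. apply Hd2. rewrite !Cmod_mult.
  pose proof (Cmod_ge_0 h). pose proof (Cmod_ge_0 al). pose proof (Cmod_ge_0 be).
  apply Rle_trans with (e / S * (S * Cmod h)). apply Rmult_le_compat_l.
  apply Rlt_le, Rdiv_lt_0_compat; lra. unfold S; nra. right; field; lra.
Qed.

Lemma holo2_cont f u v : holo2_at f u v -> forall e, 0 < e -> exists d, 0 < d /\
  forall h k, Cmod h < d -> Cmod k < d -> Cmod (Cminus (f (Cplus u h) (Cplus v k)) (f u v)) < e.
Proof.
  intros [a [b Hab]] e He. destruct (Hab 1 Rlt_0_1) as [d1 [Hd1 H1]].
  set (S := Cmod a + Cmod b + 2).
  assert (S0 : 2 <= S) by (unfold S; pose proof (Cmod_ge_0 a); pose proof (Cmod_ge_0 b); lra).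
  exists (Rmin d1 (e / S)). split. apply Rmin_pos; auto. apply Rdiv_lt_0_compat; lra.
  intros h k Hh Hk. pose proof (Rmin_l d1 (e / S)). pose proof (Rmin_r d1 (e / S)).
  specialize (H1 h k ltac:(lra) ltac:(lra)).
  pose proof (Cmod_triangle (Cminus (Cminus (f (Cplus u h) (Cplus v k)) (f u v)) (Cplus (Cmult a h) (Cmult b k)))
     (Cplus (Cmult a h) (Cmult b k))) as T.
  replace (Cplus (Cminus (Cminus (f (Cplus u h) (Cplus v k)) (f u v)) (Cplus (Cmult a h) (Cmult b k)))
     (Cplus (Cmult a h) (Cmult b k))) with (Cminus (f (Cplus u h) (Cplus v k)) (f u v)) in T by ring.
  pose proof (Cmod_triangle (Cmult a h) (Cmult b k)). rewrite !Cmod_mult in H2.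
  pose proof (Cmod_ge_0 a). pose proof (Cmod_ge_0 b). pose proof (Cmod_ge_0 h). pose proof (Cmod_ge_0 k).
  assert (Cmod h < e / S) by lra. assert (Cmod k < e / S) by lra.
  assert (Fin1 : Cmod a * Cmod h + Cmod b * Cmod k + 1 * (Cmod h + Cmod k) < S * (e / S)).
  { assert (Cmod a * Cmod h <= Cmod a * (e / S)) by (apply Rmult_le_compat_l; lra).
    assert (Cmod b * Cmod k <= Cmod b * (e / S)) by (apply Rmult_le_compat_l; lra).
    replace (S * (e / S)) with ((Cmod a + 1) * (e / S) + (Cmod b + 1) * (e / S)) by (unfold S; ring).
    nra. }
  replace (S * (e / S)) with e in Fin1 by (field; lra). lra.
Qed.

Lemma seq_lim f u v K : holo2_at f u v ->
  (forall d, 0 < d -> exists h k, Cmod h < d /\ Cmod k < d /\ f (Cplus u h) (Cplus v k) = K) -> f u v = K.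
Proof.
  intros Hf Hs. destruct (Req_dec (Cmod (Cminus K (f u v))) 0) as [E|E].
  { apply Cmod_eq_0 in E. symmetry. replace K with (Cplus (Cminus K (f u v)) (f u v)) by ring. rewrite E. ring. }
  exfalso. assert (P : 0 < Cmod (Cminus K (f u v))) by (pose proof (Cmod_ge_0 (Cminus K (f u v))); lra).
  destruct (holo2_cont f u v Hf _ P) as [d [Hd Hd2]].
  destruct (Hs d Hd) as [h [k [H1 [H2 H3]]]]. specialize (Hd2 h k H1 H2). rewrite H3 in Hd2. lra.
Qed.


Lemma chart_true0 : chart true (RtoC 0) = Inf.
Proof. unfold chart. destruct (Ceq_dec (RtoC 0) (RtoC 0)); [reflexivity|contradiction]. Qed.

Lemma chart_true_nz x : x <> RtoC 0 -> chart true x = Fin (Cinv x).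
Proof. intros H. unfold chart. destruct (Ceq_dec x (RtoC 0)); [contradiction|reflexivity]. Qed.

Definition fin_val (p : Chat) : C := match p with Fin z => z | Inf => RtoC 0 end.
Lemma Fin_inj x y : Fin x = Fin y -> x = y.
Proof. intros H. exact (f_equal fin_val H). Qed.

Lemma small_pow c X d : 1 < c -> 0 <= X -> 0 < d -> exists n, X * / c ^ n < d.
Proof.
  intros Hc HX Hd. destruct (pow_large c ((X + 1) / d) Hc) as [n Hn].
  exists n. assert (0 < c ^ n) by (apply pow_lt; lra).
  assert ((X + 1) / d * d <= c ^ n * d) by (apply Rmult_le_compat_r; lra).
  replace ((X + 1) / d * d) with (X + 1) in H0 by (field; lra).
  apply (Rmult_lt_reg_r (c ^ n)); auto. rewrite Rmult_assoc, Rinv_l by lra. lra.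
Qed.

Lemma Cmod_RtoC_mult r w : 0 <= r -> Cmod (Cmult (RtoC r) w) = r * Cmod w.
Proof. intros. rewrite Cmod_mult, Cmod_R, Rabs_right by lra. reflexivity. Qed.

Lemma RtoC_neq0 r : r <> 0 -> RtoC r <> RtoC 0.
Proof. intros H E. apply H. apply (f_equal fst) in E. exact E. Qed.

Theorem mainTheorem13 (c : R) (hc : 1 < c) (F : Chat -> Chat -> C)
  (hF : holomorphic_on_G F) :
  (forall (n : Z) (p q : Chat), p <> q ->
     F (scale (powerRZ c n) p) (scale (powerRZ c n) q) = F p q)
  <->
  (exists g : C -> C, entire g /\
     forall p q : Chat, p <> q -> F p q = g (ratio p q)).
Proof.
  assert (Cpos : forall n : Z, 0 < powerRZ c n) by (intros; apply powerRZ_lt; lra).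
  split.
  - intros Hinv.
    assert (Hpos : forall n p q, p <> q -> F (scale (c ^ n) p) (scale (c ^ n) q) = F p q).
    { intros n p q Hpq. rewrite pow_powerRZ. apply Hinv; auto. }
    assert (Hneg : forall n p q, p <> q -> F (scale (/ c ^ n) p) (scale (/ c ^ n) q) = F p q).
    { intros n p q Hpq. rewrite pow_powerRZ, <- powerRZ_neg'. apply Hinv; auto. }
    assert (Pn : forall n, 0 < c ^ n) by (intros; apply pow_lt; lra).
    set (g := fun t => F (Fin (Cplus (RtoC 1) t)) (Fin t)).
    exists g. split.
    + intros t.
      apply (holo_ext (fun s => F (chart false (Cplus (RtoC 1) (Cmult (RtoC 1) s))) (chart false (Cplus (RtoC 0) (Cmult (RtoC 1) s))))).
      { intros s. unfold g. simpl. f_equal; f_equal; ring. }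
      apply (holo2_aff (fun u' v' => F (chart false u') (chart false v'))).
      apply hF. simpl. intro E. apply Fin_inj in E. apply (f_equal fst) in E. simpl in E. lra.
    + intros p q Hpq. destruct p as [z|]; destruct q as [w|].
      *
        assert (Hzw : Cminus z w <> RtoC 0).
        { intro E. apply Hpq. f_equal. replace z with (Cplus (Cminus z w) w) by ring. rewrite E. ring. }
        set (phi := fun mu => F (chart false (Cplus (RtoC 0) (Cmult z mu))) (chart false (Cplus (RtoC 0) (Cmult w mu)))).
        assert (Hph : forall mu, mu <> RtoC 0 -> holo1_at phi mu).
        { intros mu Hmu. apply (holo2_aff (fun u' v' => F (chart false u') (chart false v'))).
          apply hF. simpl. intro E. apply Fin_inj in E. rename E into E1.
          apply (Cmult_neq0 _ _ Hzw Hmu).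
          replace (Cmult (Cminus z w) mu) with (Cminus (Cplus (RtoC 0) (Cmult z mu)) (Cplus (RtoC 0) (Cmult w mu))) by ring.
          rewrite E1. ring. }
        assert (Hiv : forall mu, mu <> RtoC 0 -> phi (Cmult (RtoC c) mu) = phi mu).
        { intros mu Hmu. unfold phi. simpl.
          rewrite <- (Hpos 1%nat (Fin (Cplus (RtoC 0) (Cmult z mu))) (Fin (Cplus (RtoC 0) (Cmult w mu)))).
          - simpl. f_equal; f_equal; destruct z, w, mu; cpair.
          - intro E. apply Fin_inj in E. rename E into E1. apply (Cmult_neq0 _ _ Hzw Hmu).
            replace (Cmult (Cminus z w) mu) with (Cminus (Cplus (RtoC 0) (Cmult z mu)) (Cplus (RtoC 0) (Cmult w mu))) by ring.
            rewrite E1. ring. }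
        assert (Ninv : Cinv (Cminus z w) <> RtoC 0).
        { intro E. assert (Cmult (Cminus z w) (Cinv (Cminus z w)) = RtoC 1) by (field; auto).
          rewrite E in H. apply (f_equal fst) in H. simpl in H. lra. }
        pose proof (const_Cstar phi c hc Hph Hiv (RtoC 1) (Cinv (Cminus z w)) (RtoC_neq0 1 ltac:(lra)) Ninv) as K.
        unfold phi in K. simpl in K. unfold g, ratio.
        replace (Cplus (RtoC 0) (Cmult z (RtoC 1))) with z in K by ring.
        replace (Cplus (RtoC 0) (Cmult w (RtoC 1))) with w in K by ring.
        rewrite K. f_equal; f_equal; unfold Cdiv; field; auto.
      *
        set (f := fun u' v' => F (chart false u') (chart true v')).
        assert (Hf : holo2_at f (RtoC 0) (RtoC 0)).
        { apply hF. rewrite chart_true0. simpl. discriminate. }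
        assert (E1 : f (RtoC 0) (RtoC 0) = F (Fin z) Inf).
        { apply seq_lim; auto. intros d Hd.
          destruct (small_pow c (Cmod z) d hc (Cmod_ge_0 z) Hd) as [n Hn].
          exists (Cmult (RtoC (/ c ^ n)) z), (RtoC 0). split; [|split].
          - rewrite Cmod_RtoC_mult. lra. apply Rlt_le, Rinv_0_lt_compat; auto.
          - rewrite Cmod_0; lra.
          - unfold f. replace (Cplus (RtoC 0) (RtoC 0)) with (RtoC 0) by ring. rewrite chart_true0.
            rewrite <- (Hneg n (Fin z) Inf) by discriminate. simpl. f_equal. f_equal. ring. }
        assert (E2 : f (RtoC 0) (RtoC 0) = F (Fin (RtoC 0)) (Fin (RtoC (-1)))).
        { apply seq_lim; auto. intros d Hd.
          destruct (small_pow c 1 d hc ltac:(lra) Hd) as [n Hn].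
          exists (RtoC 0), (Copp (RtoC (/ c ^ n))). split; [|split].
          - rewrite Cmod_0; lra.
          - rewrite Cmod_opp, Cmod_R, Rabs_right. lra. apply Rle_ge, Rlt_le, Rinv_0_lt_compat; auto.
          - unfold f. rewrite chart_true_nz.
            2:{ intro E. apply (f_equal fst) in E. simpl in E. assert (0 < / c ^ n) by (apply Rinv_0_lt_compat; auto). lra. }
            rewrite <- (Hpos n (Fin (RtoC 0)) (Fin (RtoC (-1)))).
            2:{ intro E. apply Fin_inj in E. apply (f_equal fst) in E. simpl in E. lra. }
            simpl. f_equal; f_equal.
            + cpair.
            + unfold Cinv. simpl. apply injective_projections; simpl; field; pose proof (Pn n); lra. }
        rewrite <- E1, E2. unfold g, ratio. f_equal. f_equal. cpair.
      *
        set (f := fun u' v' => F (chart true u') (chart false v')).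
        assert (Hf : holo2_at f (RtoC 0) (RtoC 0)).
        { apply hF. rewrite chart_true0. simpl. discriminate. }
        assert (E1 : f (RtoC 0) (RtoC 0) = F Inf (Fin w)).
        { apply seq_lim; auto. intros d Hd.
          destruct (small_pow c (Cmod w) d hc (Cmod_ge_0 w) Hd) as [n Hn].
          exists (RtoC 0), (Cmult (RtoC (/ c ^ n)) w). split; [|split].
          - rewrite Cmod_0; lra.
          - rewrite Cmod_RtoC_mult. lra. apply Rlt_le, Rinv_0_lt_compat; auto.
          - unfold f. replace (Cplus (RtoC 0) (RtoC 0)) with (RtoC 0) by ring. rewrite chart_true0.
            rewrite <- (Hneg n Inf (Fin w)) by discriminate. simpl. f_equal. f_equal. ring. }
        assert (E2 : f (RtoC 0) (RtoC 0) = F (Fin (RtoC 1)) (Fin (RtoC 0))).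
        { apply seq_lim; auto. intros d Hd.
          destruct (small_pow c 1 d hc ltac:(lra) Hd) as [n Hn].
          exists (RtoC (/ c ^ n)), (RtoC 0). split; [|split].
          - rewrite Cmod_R, Rabs_right. lra. apply Rle_ge, Rlt_le, Rinv_0_lt_compat; auto.
          - rewrite Cmod_0; lra.
          - unfold f. rewrite chart_true_nz.
            2:{ intro E. apply (f_equal fst) in E. simpl in E. assert (0 < / c ^ n) by (apply Rinv_0_lt_compat; auto). lra. }
            rewrite <- (Hpos n (Fin (RtoC 1)) (Fin (RtoC 0))).
            2:{ intro E. apply Fin_inj in E. apply (f_equal fst) in E. simpl in E. lra. }
            simpl. f_equal; f_equal.
            + unfold Cinv. simpl. apply injective_projections; simpl; field; pose proof (Pn n); lra.
            + cpair. }
        rewrite <- E1, E2. unfold g, ratio. f_equal. f_equal. cpair.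
      * tauto.
  - intros [g [Hg Hgr]] n p q Hpq.
    assert (Hr := Cpos n). set (r := powerRZ c n) in *.
    assert (Hsc : scale r p <> scale r q).
    { destruct p as [z|]; destruct q as [w|]; simpl; try discriminate; try (exfalso; apply Hpq; reflexivity).
      intro E. apply Fin_inj in E. rename E into E1. apply Hpq. f_equal.
      destruct z as [z1 z2], w as [w1 w2].
      pose proof (f_equal fst E1) as F1. pose proof (f_equal snd E1) as F2. simpl in F1, F2.
      apply injective_projections; simpl; nra. }
    rewrite (Hgr _ _ Hsc), (Hgr _ _ Hpq). f_equal.
    destruct p as [z|]; destruct q as [w|]; simpl; auto.
    + assert (Hzw : Cminus z w <> RtoC 0).
      { intro E. apply Hpq. f_equal. replace z with (Cplus (Cminus z w) w) by ring. rewrite E. ring. }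
      assert (RtoC r <> RtoC 0) by (apply RtoC_neq0; lra).
      unfold Cdiv. field. split; auto.
      replace (Cminus (Cmult (RtoC r) z) (Cmult (RtoC r) w)) with (Cmult (RtoC r) (Cminus z w)) by ring.
      apply Cmult_neq0; auto.
Qed.
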